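(* For an integer $n \geq 3$, let $W_n$ be the wheel graph of order $n+1$. Then $$\phi_{\mathbb{C}}(W_n) = \begin{cases} 2 & \text{if } n \text{ is even},\\ 1 + 2\sin\left(\frac{\pi}{6}\cdot\frac{n}{n-1}\right) & \text{if } n \equiv 1 \text{ or } 3 \pmod 6,\\ 1 + 2\sin\left(\frac{\pi}{6}\cdot\frac{n+1}{n}\right) & \text{if } n \equiv 5 \pmod 6.\end{cases}$$
   Context: The wheel graph $W_n$ ($n\ge 3$) consists of a cycle $v_0v_1\cdots v_{n-1}v_0$ of length $n$ together with one further vertex $u$ adjacent to every $v_j$. For a real number $r \geq 2$, a complex nowhere-zero $r$-flow on a graph $G$ is an orientation of $G$ together with a map $\varphi\colon E(G)\to\mathbb{C}$ such that $1 \le |\varphi(e)| \le r-1$ for every edge $e$ and, at every vertex, the sum of the values on incoming edges equals the sum of the values on outgoing edges. For a bridgeless graph $G$, the complex flow number $\phi_{\mathbb{C}}(G)$ is the minimum (equivalently infimum; it is attained) of the real numbers $r\ge 2$ such that $G$ admits a complex nowhere-zero $r$-flow. *)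

(* Defs.v *)
From Stdlib Require Import Reals List Arith.
From Coquelicot Require Import Coquelicot.
Import ListNotations.
Open Scope R_scope.

(* A finite (multi)graph: vertices 0 .. nv-1, and a list of edges given by
   their two endpoints; edge number i is the i-th element of the list. *)
Record graph := Graph { nv : nat; edges : list (nat * nat) }.

(* An orientation assigns to each edge index a boolean: [false] means the
   edge (a,b) is oriented a -> b, [true] means b -> a. *)
Definition tail (G : graph) (o : nat -> bool) (i : nat) : nat :=
  let e := nth i (edges G) (0%nat, 0%nat) in if o i then snd e else fst e.
Definition head (G : graph) (o : nat -> bool) (i : nat) : nat :=
  let e := nth i (edges G) (0%nat, 0%nat) in if o i then fst e else snd e.

Definition inflow (G : graph) (o : nat -> bool) (phi : nat -> C) (x : nat) : C :=
  fold_right Cplus 0%C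
    (map (fun i => if Nat.eqb (head G o i) x then phi i else 0%C)
         (seq 0 (length (edges G)))).
Definition outflow (G : graph) (o : nat -> bool) (phi : nat -> C) (x : nat) : C :=
  fold_right Cplus 0%C
    (map (fun i => if Nat.eqb (tail G o i) x then phi i else 0%C)
         (seq 0 (length (edges G)))).

Definition is_complex_nz_flow (G : graph) (r : R) (o : nat -> bool) (phi : nat -> C) : Prop :=
  (forall i, (i < length (edges G))%nat -> 1 <= Cmod (phi i) <= r - 1) /\
  (forall x, (x < nv G)%nat -> inflow G o phi x = outflow G o phi x).

Definition has_complex_nz_flow (G : graph) (r : R) : Prop :=
  exists (o : nat -> bool) (phi : nat -> C), is_complex_nz_flow G r o phi.

Definition is_complex_flow_number (G : graph) (p : R) : Prop :=
  2 <= p /\ has_complex_nz_flow G p /\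
  (forall r, 2 <= r -> has_complex_nz_flow G r -> p <= r).

(* Wheel W_n: rim vertices v_j = j (0 <= j < n), hub u = n.
   Edges: spokes u v_j, then rim edges v_j v_{j+1 mod n}. *)
Definition wheel (n : nat) : graph :=
  Graph (S n)
    (map (fun j => (n, j)) (seq 0 n) ++ map (fun j => (j, Nat.modulo (S j) n)) (seq 0 n)).

(* Main.v *)
Require Import Defs.
From Stdlib Require Import Reals Arith Lra Lia List ZArith Nsatz Classical.
From Coquelicot Require Import Coquelicot.
Import ListNotations.
Open Scope R_scope.

Definition rsum (f : nat -> R) (l : list nat) : R := fold_right Rplus 0 (map f l).

Lemma fst_sumC (g : nat -> C) l :
  fst (fold_right Cplus 0%C (map g l)) = rsum (fun i => fst (g i)) l.
Proof. induction l as [|a l IH]; simpl; [reflexivity|]. rewrite IH. reflexivity. Qed.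
Lemma snd_sumC (g : nat -> C) l :
  snd (fold_right Cplus 0%C (map g l)) = rsum (fun i => snd (g i)) l.
Proof. induction l as [|a l IH]; simpl; [reflexivity|]. rewrite IH. reflexivity. Qed.

Lemma rsum_ext f g l : (forall i, In i l -> f i = g i) -> rsum f l = rsum g l.
Proof.
  induction l as [|a l IH]; intros H; [reflexivity|].
  change (f a + rsum f l = g a + rsum g l).
  rewrite (H a (or_introl eq_refl)), IH; [reflexivity|].
  intros i Hi; apply H; right; exact Hi.
Qed.
Lemma rsum_plus f g l : rsum (fun i => f i + g i) l = rsum f l + rsum g l.
Proof. induction l as [|a l IH]; unfold rsum in *; simpl; [lra|]. rewrite IH. lra. Qed.
Lemma rsum_minus f g l : rsum (fun i => f i - g i) l = rsum f l - rsum g l.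
Proof. induction l as [|a l IH]; unfold rsum in *; simpl; [lra|]. rewrite IH. lra. Qed.
Lemma rsum_scal c f l : rsum (fun i => c * f i) l = c * rsum f l.
Proof. induction l as [|a l IH]; unfold rsum in *; simpl; [lra|]. rewrite IH. lra. Qed.
Lemma rsum_const c l : rsum (fun _ => c) l = INR (length l) * c.
Proof. induction l as [|a l IH]; unfold rsum in *; simpl; [lra|]. rewrite IH.
  destruct (length l); simpl; lra. Qed.
Lemma rsum_app f l1 l2 : rsum f (l1 ++ l2) = rsum f l1 + rsum f l2.
Proof. induction l1 as [|a l IH]; unfold rsum in *; simpl; [lra|]. rewrite IH. lra. Qed.
Lemma rsum_nil f : rsum f nil = 0.
Proof. reflexivity. Qed.
Lemma rsum_cons f a l : rsum f (a :: l) = f a + rsum f l.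
Proof. reflexivity. Qed.
Lemma rsum_le f g l : (forall i, In i l -> f i <= g i) -> rsum f l <= rsum g l.
Proof.
  induction l as [|a l IH]; intros H; unfold rsum in *; simpl; [lra|].
  assert (H1 := H a (or_introl eq_refl)).
  assert (H2 : fold_right Rplus 0 (map f l) <= fold_right Rplus 0 (map g l))
    by (apply IH; intros i Hi; apply H; right; exact Hi). lra.
Qed.
Lemma rsum_abs f l : Rabs (rsum f l) <= rsum (fun i => Rabs (f i)) l.
Proof.
  induction l as [|a l IH]; unfold rsum in *; simpl.
  - rewrite Rabs_R0; lra.
  - eapply Rle_trans; [apply Rabs_triang|]. lra.
Qed.
Lemma rsum_map f h l : rsum f (map h l) = rsum (fun i => f (h i)) l.
Proof. unfold rsum. rewrite map_map. reflexivity. Qed.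

Lemma rsum_ind (k : nat) (c : R) s m :
  rsum (fun i => if Nat.eqb i k then c else 0) (seq s m) =
  if andb (Nat.leb s k) (Nat.ltb k (s + m)) then c else 0.
Proof.
  revert s. induction m as [|m IH]; intros s.
  - simpl. destruct (Nat.leb s k) eqn:E1; destruct (Nat.ltb k (s+0)) eqn:E2; simpl; try reflexivity.
    apply Nat.leb_le in E1. apply Nat.ltb_lt in E2. lia.
  - simpl seq. rewrite rsum_cons, IH.
    destruct (Nat.eqb s k) eqn:E.
    + apply Nat.eqb_eq in E. subst.
      destruct (Nat.leb (S k) k) eqn:E1; [apply Nat.leb_le in E1; lia|]. simpl.
      rewrite Nat.leb_refl. replace (Nat.ltb k (k + S m)) with true; [simpl; lra|].
      symmetry; apply Nat.ltb_lt; lia.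
    + apply Nat.eqb_neq in E.
      destruct (Nat.leb (S s) k) eqn:E1; destruct (Nat.ltb k (S s + m)) eqn:E2;
      destruct (Nat.leb s k) eqn:E3; destruct (Nat.ltb k (s + S m)) eqn:E4; simpl;
      try lra;
      repeat match goal with
      | H : Nat.leb _ _ = true |- _ => apply Nat.leb_le in H
      | H : Nat.leb _ _ = false |- _ => apply Nat.leb_gt in H
      | H : Nat.ltb _ _ = true |- _ => apply Nat.ltb_lt in H
      | H : Nat.ltb _ _ = false |- _ => apply Nat.ltb_ge in H
      end; lia.
Qed.

Lemma rsum_ind_in (k : nat) (c : R) m : (k < m)%nat ->
  rsum (fun i => if Nat.eqb i k then c else 0) (seq 0 m) = c.
Proof.
  intros H. rewrite rsum_ind. replace (Nat.leb 0 k) with true by (symmetry; apply Nat.leb_le; lia).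
  replace (Nat.ltb k (0 + m)) with true by (symmetry; apply Nat.ltb_lt; lia). reflexivity.
Qed.

Definition prv (n j : nat) : nat := match j with O => (n - 1)%nat | S k => k end.

Lemma wheel_len n : length (edges (wheel n)) = (2 * n)%nat.
Proof. simpl. rewrite length_app, !length_map, length_seq. lia. Qed.

Lemma wheel_nth_spoke n i : (i < n)%nat -> nth i (edges (wheel n)) (0%nat,0%nat) = (n, i).
Proof.
  intros H. simpl. rewrite app_nth1 by (rewrite length_map, length_seq; exact H).
  rewrite nth_indep with (d' := (n, 0%nat)) by (rewrite length_map, length_seq; exact H).
  rewrite map_nth, seq_nth by exact H. reflexivity.
Qed.

Lemma wheel_nth_rim n i : (n <= i < 2 * n)%nat ->
  nth i (edges (wheel n)) (0%nat,0%nat) = ((i - n)%nat, Nat.modulo (S (i - n)) n).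
Proof.
  intros H. simpl. rewrite app_nth2 by (rewrite length_map, length_seq; lia).
  rewrite length_map, length_seq.
  rewrite nth_indep with (d' := (fun j => (j, Nat.modulo (S j) n)) 0%nat) by (rewrite length_map, length_seq; lia).
  rewrite (map_nth (fun j => (j, Nat.modulo (S j) n)) (seq 0 n) 0%nat).
  rewrite seq_nth by lia. reflexivity.
Qed.

Lemma succ_mod_prv n k j : (2 <= n)%nat -> (k < n)%nat -> (j < n)%nat ->
  (Nat.modulo (S k) n = j <-> k = prv n j).
Proof.
  intros Hn Hk Hj. destruct (Nat.eq_dec (S k) n) as [E|E].
  - rewrite E, Nat.mod_same by lia. destruct j; simpl; lia.
  - rewrite Nat.mod_small by lia. destruct j; simpl; lia.
Qed.
Lemma rsum_opp f l : rsum (fun i => - f i) l = - rsum f l.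
Proof. induction l as [|a l IH]; unfold rsum in *; simpl; [lra|]. rewrite IH. lra. Qed.
Lemma rsum_zero l : rsum (fun _ => 0) l = 0.
Proof. induction l as [|a l IH]; unfold rsum in *; simpl; [lra|]. rewrite IH. lra. Qed.

Definition psi (o : nat -> bool) (phi : nat -> C) (i : nat) : C :=
  if o i then Copp (phi i) else phi i.

Record lproj (proj : C -> R) : Prop := {
  lp0 : proj (RtoC 0) = 0;
  lpopp : forall z, proj (Copp z) = - proj z;
  lpplus : forall z w, proj (Cplus z w) = proj z + proj w }.

Lemma lproj_fst : lproj fst.
Proof. split; intros; simpl; reflexivity. Qed.
Lemma lproj_snd : lproj snd.
Proof. split; intros; simpl; reflexivity. Qed.

Lemma proj_sumC proj (Hp : lproj proj) (g : nat -> C) l :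
  proj (fold_right Cplus 0%C (map g l)) = rsum (fun i => proj (g i)) l.
Proof.
  induction l as [|a l IH]; simpl.
  - apply (lp0 _ Hp).
  - rewrite (lpplus _ Hp), IH. reflexivity.
Qed.

Lemma proj_if proj (Hp : lproj proj) (b : bool) z :
  proj (if b then z else RtoC 0) = if b then proj z else 0.
Proof. destruct b; [reflexivity| apply (lp0 _ Hp)]. Qed.

Lemma balance_sum proj (Hp : lproj proj) G o phi x :
  proj (inflow G o phi x) - proj (outflow G o phi x) =
  rsum (fun i => (if Nat.eqb (Defs.head G o i) x then proj (phi i) else 0)
               - (if Nat.eqb (Defs.tail G o i) x then proj (phi i) else 0))
       (seq 0 (length (edges G))).
Proof.
  unfold inflow, outflow. rewrite !(proj_sumC proj Hp), <- rsum_minus.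
  apply rsum_ext. intros i _. rewrite !(proj_if proj Hp). reflexivity.
Qed.

Lemma rim_point n o phi j proj (Hp : lproj proj) i :
  (3 <= n)%nat -> (j < n)%nat -> (i < 2 * n)%nat ->
  (if Nat.eqb (Defs.head (wheel n) o i) j then proj (phi i) else 0)
   - (if Nat.eqb (Defs.tail (wheel n) o i) j then proj (phi i) else 0)
  = (if Nat.eqb i j then proj (psi o phi j) else 0)
    + (if Nat.eqb i (n + prv n j) then proj (psi o phi (n + prv n j)) else 0)
    - (if Nat.eqb i (n + j) then proj (psi o phi (n + j)) else 0).
Proof.
  intros Hn Hj Hi. unfold Defs.head, Defs.tail, psi.
  assert (Hprv : (prv n j < n)%nat) by (destruct j; simpl; lia).
  destruct (Nat.lt_ge_cases i n) as [Hl|Hl].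
  - rewrite wheel_nth_spoke by exact Hl.
    destruct (Nat.eqb_spec i j) as [E|E].
    + subst j. destruct (o i); simpl;
      repeat match goal with |- context [Nat.eqb ?a ?b] => destruct (Nat.eqb_spec a b); try lia end;
      try rewrite (lpopp _ Hp); lra.
    + destruct (o i); simpl;
      repeat match goal with |- context [Nat.eqb ?a ?b] => destruct (Nat.eqb_spec a b); try lia end;
      lra.
  - rewrite wheel_nth_rim by lia.
    replace (Nat.eqb i j) with false by (symmetry; apply Nat.eqb_neq; lia).
    assert (Hs := succ_mod_prv n (i - n) j ltac:(lia) ltac:(lia) Hj).
    destruct (Nat.eqb_spec i (n + prv n j)) as [E1|E1];
    destruct (Nat.eqb_spec i (n + j)) as [E2|E2].
    + exfalso. destruct j; simpl in E1; lia.
    + assert (Nat.modulo (S (i - n)) n = j) by (apply Hs; lia).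
      assert (i - n <> j)%nat by (destruct j; simpl in *; lia).
      rewrite <- E1. destruct (o i); simpl fst; simpl snd;
      repeat match goal with |- context [Nat.eqb ?a ?b] => destruct (Nat.eqb_spec a b); try lia end;
      try rewrite (lpopp _ Hp); lra.
    + assert (Nat.modulo (S (i - n)) n <> j) by (intro H; apply Hs in H; lia).
      rewrite <- E2. destruct (o i); simpl fst; simpl snd;
      repeat match goal with |- context [Nat.eqb ?a ?b] => destruct (Nat.eqb_spec a b); try lia end;
      try rewrite (lpopp _ Hp); lra.
    + assert (Nat.modulo (S (i - n)) n <> j) by (intro H; apply Hs in H; lia).
      destruct (o i); simpl fst; simpl snd;
      repeat match goal with |- context [Nat.eqb ?a ?b] => destruct (Nat.eqb_spec a b); try lia end;
      lra.
Qed.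

Lemma rim_balance n o phi j proj (Hp : lproj proj) :
  (3 <= n)%nat -> (j < n)%nat ->
  proj (inflow (wheel n) o phi j) - proj (outflow (wheel n) o phi j) =
  proj (psi o phi j) + proj (psi o phi (n + prv n j)) - proj (psi o phi (n + j)).
Proof.
  intros Hn Hj. rewrite (balance_sum proj Hp), wheel_len.
  assert (Hprv : (prv n j < n)%nat) by (destruct j; simpl; lia).
  rewrite (rsum_ext _ (fun i => (if Nat.eqb i j then proj (psi o phi j) else 0)
    + (if Nat.eqb i (n + prv n j) then proj (psi o phi (n + prv n j)) else 0)
    - (if Nat.eqb i (n + j) then proj (psi o phi (n + j)) else 0))).
  2:{ intros i Hi. apply in_seq in Hi. apply rim_point; auto; lia. }
  rewrite rsum_minus, rsum_plus, !rsum_ind_in by lia. reflexivity.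
Qed.

Lemma hub_balance n phi proj (Hp : lproj proj) :
  (3 <= n)%nat ->
  proj (inflow (wheel n) (fun _ => false) phi n) - proj (outflow (wheel n) (fun _ => false) phi n) =
  - rsum (fun i => proj (phi i)) (seq 0 n).
Proof.
  intros Hn. rewrite (balance_sum proj Hp), wheel_len.
  replace (2 * n)%nat with (n + n)%nat by lia. rewrite seq_app, rsum_app.
  unfold Defs.head, Defs.tail.
  rewrite (rsum_ext _ (fun i => - proj (phi i)) (seq 0 n)).
  2:{ intros i Hi. apply in_seq in Hi. rewrite wheel_nth_spoke by lia. simpl.
      rewrite Nat.eqb_refl. replace (Nat.eqb i n) with false by (symmetry; apply Nat.eqb_neq; lia). lra. }
  rewrite (rsum_ext _ (fun i => 0) (seq (0 + n) n)).
  2:{ intros i Hi. apply in_seq in Hi. rewrite wheel_nth_rim by lia. simpl.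
      replace (Nat.eqb (Nat.modulo (S (i - n)) n) n) with false.
      2:{ symmetry. apply Nat.eqb_neq. assert (Nat.modulo (S (i - n)) n < n)%nat by (apply Nat.mod_upper_bound; lia). lia. }
      replace (Nat.eqb (i - n) n) with false by (symmetry; apply Nat.eqb_neq; lia). lra. }
  rewrite rsum_zero, rsum_opp. lra.
Qed.

Lemma rsum_prv n f : (1 <= n)%nat ->
  rsum (fun i => f (prv n i)) (seq 0 n) = rsum f (seq 0 n).
Proof.
  intros Hn. destruct n as [|m]; [lia|].
  rewrite <- (Nat.add_1_r m) at 2. rewrite seq_app, rsum_app.
  simpl seq at 1. rewrite rsum_cons. simpl prv at 1.
  rewrite <- seq_shift, rsum_map. simpl prv.
  replace (S m - 1)%nat with m by lia. simpl. replace (m - 0)%nat with m by lia.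
  change (rsum f (m :: nil)) with (f m + 0). change (rsum (fun i => f i) (seq 0 m)) with (rsum f (seq 0 m)). lra.
Qed.

Lemma C_eq (z w : C) : fst z = fst w -> snd z = snd w -> z = w.
Proof. destruct z, w; simpl; intros; subst; reflexivity. Qed.

Definition cm (x y : R) : R := sqrt (x ^ 2 + y ^ 2).

Lemma flow_to_seq n r o phi : (3 <= n)%nat -> is_complex_nz_flow (wheel n) r o phi ->
  forall j, (j < n)%nat ->
   let X := fun k => fst (psi o phi (n + k)) in
   let Y := fun k => snd (psi o phi (n + k)) in
   1 <= cm (X j) (Y j) <= r - 1 /\
   1 <= cm (X j - X (prv n j)) (Y j - Y (prv n j)) <= r - 1.
Proof.
  intros Hn [Hb Hc] j Hj X Y.
  rewrite wheel_len in Hb. simpl nv in Hc.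
  assert (Hprv : (prv n j < n)%nat) by (destruct j; simpl; lia).
  assert (Hm : forall i, (i < 2 * n)%nat -> 1 <= Cmod (psi o phi i) <= r - 1).
  { intros i Hi. unfold psi. destruct (o i); [rewrite Cmod_opp|]; apply Hb; exact Hi. }
  split.
  - apply (Hm (n + j)%nat). lia.
  - assert (E := Hc j ltac:(lia)).
    assert (E1 := rim_balance n o phi j fst lproj_fst Hn Hj).
    assert (E2 := rim_balance n o phi j snd lproj_snd Hn Hj).
    rewrite E in E1, E2.
    replace (cm (X j - X (prv n j)) (Y j - Y (prv n j))) with (Cmod (psi o phi j)).
    + apply Hm. lia.
    + unfold Cmod, cm, X, Y. f_equal. f_equal; f_equal; lra.
Qed.

Lemma seq_to_flow n r (X Y : nat -> R) : (3 <= n)%nat ->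
  (forall j, (j < n)%nat -> 1 <= cm (X j) (Y j) <= r - 1 /\
      1 <= cm (X j - X (prv n j)) (Y j - Y (prv n j)) <= r - 1) ->
  has_complex_nz_flow (wheel n) r.
Proof.
  intros Hn H.
  set (phi := fun i => if Nat.ltb i n then (X i - X (prv n i), Y i - Y (prv n i))
                       else (X (i - n)%nat, Y (i - n)%nat) : C).
  exists (fun _ => false), phi. split.
  - intros i Hi. rewrite wheel_len in Hi. unfold phi.
    destruct (Nat.ltb_spec i n).
    + apply H; auto.
    + apply H; lia.
  - intros x Hx. simpl nv in Hx.
    assert (Hpsi : forall i, psi (fun _ => false) phi i = phi i) by reflexivity.
    destruct (Nat.eq_dec x n) as [->|Hxn].
    + assert (E1 := hub_balance n phi fst lproj_fst Hn).
      assert (E2 := hub_balance n phi snd lproj_snd Hn).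
      assert (S1 : rsum (fun i => fst (phi i)) (seq 0 n) = 0).
      { rewrite (rsum_ext _ (fun i => X i - X (prv n i))).
        - rewrite rsum_minus, (rsum_prv n X) by lia. lra.
        - intros i Hi; apply in_seq in Hi. unfold phi. destruct (Nat.ltb_spec i n); [reflexivity|lia]. }
      assert (S2 : rsum (fun i => snd (phi i)) (seq 0 n) = 0).
      { rewrite (rsum_ext _ (fun i => Y i - Y (prv n i))).
        - rewrite rsum_minus, (rsum_prv n Y) by lia. lra.
        - intros i Hi; apply in_seq in Hi. unfold phi. destruct (Nat.ltb_spec i n); [reflexivity|lia]. }
      apply C_eq; lra.
    + assert (Hxl : (x < n)%nat) by lia.
      assert (E1 := rim_balance n (fun _ => false) phi x fst lproj_fst Hn Hxl).
      assert (E2 := rim_balance n (fun _ => false) phi x snd lproj_snd Hn Hxl).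
      cbv beta iota delta [psi] in E1, E2.
      assert (Hprv : (prv n x < n)%nat) by (destruct x; simpl; lia).
      assert (F1 : phi x = (X x - X (prv n x), Y x - Y (prv n x))).
      { unfold phi. destruct (Nat.ltb_spec x n); [reflexivity|lia]. }
      assert (F2 : phi (n + prv n x)%nat = (X (prv n x), Y (prv n x))).
      { unfold phi. destruct (Nat.ltb_spec (n + prv n x) n); [lia|].
        replace (n + prv n x - n)%nat with (prv n x) by lia. reflexivity. }
      assert (F3 : phi (n + x)%nat = (X x, Y x)).
      { unfold phi. destruct (Nat.ltb_spec (n + x) n); [lia|].
        replace (n + x - n)%nat with x by lia. reflexivity. }
      rewrite F1, F2, F3 in E1, E2. simpl in E1, E2.
      apply C_eq; lra.
Qed.

Lemma r3sq : sqrt 3 * sqrt 3 = 3.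
Proof. apply sqrt_sqrt. lra. Qed.
Lemma pyth x : sin x * sin x + cos x * cos x = 1.
Proof. pose proof (sin2_cos2 x). unfold Rsqr in H. exact H. Qed.

Lemma sin_pi6_plus A : 2 * sin (PI/6 + A) = cos A + sqrt 3 * sin A.
Proof. rewrite sin_plus, sin_PI6, cos_PI6. field. Qed.
Lemma cos_m_pi3 A : 2 * cos (A - PI/3) = cos A + sqrt 3 * sin A.
Proof. rewrite cos_minus, cos_PI3, sin_PI3. field. Qed.
Lemma cos_2pi3_plus x : 2 * cos (PI/3 + PI/3 + x) = - cos x - sqrt 3 * sin x.
Proof.
  assert (c2 : cos (PI/3 + PI/3) = -1/2).
  { rewrite cos_plus, cos_PI3, sin_PI3.
    replace (sqrt 3 / 2 * (sqrt 3 / 2)) with (sqrt 3 * sqrt 3 / 4) by field. rewrite r3sq. field. }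
  assert (s2 : sin (PI/3 + PI/3) = sqrt 3 / 2).
  { rewrite sin_plus, cos_PI3, sin_PI3. field. }
  rewrite cos_plus, c2, s2. field. Qed.

Lemma key_id A U : (cos A + sqrt 3 * sin A) * (cos (U - A) + sqrt 3 * sin (U - A))
   = (cos U + sqrt 3 * sin U) + 4 * sin A * sin (U - A).
Proof.
  rewrite cos_minus, sin_minus.
  pose proof (pyth A). pose proof (pyth U). pose proof r3sq.
  nsatz.
Qed.

Lemma G_id a b T p : a*a + b*b - 2*a*b*cos T =
  (a * cos p - b * cos (T - p))^2 + (a * sin p + b * sin (T - p))^2.
Proof.
  rewrite cos_minus, sin_minus.
  pose proof (pyth T). pose proof (pyth p). simpl. nsatz.
Qed.

Lemma id1 (sA cA sB cB r3 : R) : sA*sA+cA*cA = 1 -> sB*sB+cB*cB=1 -> r3*r3 = 3 ->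
  (cA + r3*sA)*(cA + r3*sA)+(cB + r3*sB)*(cB + r3*sB)
    -(cA + r3*sA)*(cB + r3*sB)*((cA*cB-sA*sB) + r3*(sA*cB+cA*sB)) =
  1 + 4*sA*sA - 4*sA*(sA*(cB*cB-sB*sB) + cA*(2*sB*cB)).
Proof. intros H1 H2 H3. nsatz. Qed.

Lemma cos_pi3_AB A B : 2 * cos (PI/3 - A - B) =
  (cos A * cos B - sin A * sin B) + sqrt 3 * (sin A * cos B + cos A * sin B).
Proof. rewrite !cos_minus, !sin_minus, cos_PI3, sin_PI3. field. Qed.

Lemma sin_A2B A B : sin (A + 2 * B) = sin A * (cos B * cos B - sin B * sin B) + cos A * (2 * sin B * cos B).
Proof. rewrite sin_plus, sin_2a, cos_2a. ring. Qed.

Lemma PI_bounds : 3 < PI <= 4.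
Proof. pose proof PI2_3_2. pose proof PI_4. lra. Qed.

Lemma asin_half_facts x : 1 <= x -> x * x <= 2 ->
  PI/6 <= asin (x/2) <= PI/4 /\ sin (asin (x/2)) = x/2.
Proof.
  intros H1 H2.
  assert (Hx : -1 <= x/2 <= 1).
  { split; [lra|]. nra. }
  assert (Hs := sin_asin _ Hx). pose proof (asin_bound (x/2)). pose proof PI_bounds.
  split; [|exact Hs]. split.
  - apply sin_incr_0; try lra. rewrite sin_PI6, Hs. lra.
  - apply sin_incr_0; try lra. rewrite Hs, sin_PI4.
    assert (Hq : x <= sqrt 2).
    { rewrite <- (sqrt_square x) by lra. apply sqrt_le_1_alt; nra. }
    assert (Hq2 : sqrt 2 * sqrt 2 = 2) by (apply sqrt_sqrt; lra).
    assert (Hq3 : 0 < sqrt 2) by (apply sqrt_lt_R0; lra).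
    apply (Rmult_le_reg_r (sqrt 2)); [exact Hq3|].
    replace (1 / sqrt 2 * sqrt 2) with 1 by (field; lra). nra.
Qed.

Lemma asin_half_mono x y : 1 <= x -> x <= y -> y * y <= 2 -> asin (x/2) <= asin (y/2).
Proof.
  intros H1 H2 H3.
  destruct (asin_half_facts x H1 ltac:(nra)) as [[Ha1 Ha2] Ha3].
  destruct (asin_half_facts y ltac:(lra) H3) as [[Hb1 Hb2] Hb3].
  pose proof PI_bounds.
  apply sin_incr_0; lra.
Qed.

Lemma two_sin_e x : 1 <= x -> x * x <= 2 ->
  x = cos (asin (x/2) - PI/6) + sqrt 3 * sin (asin (x/2) - PI/6).
Proof.
  intros H1 H2. rewrite <- sin_pi6_plus.
  replace (PI/6 + (asin (x/2) - PI/6)) with (asin (x/2)) by ring.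
  destruct (asin_half_facts x H1 H2) as [_ E]. rewrite E. field.
Qed.

Lemma per_step a b d R t :
  1 <= a <= R -> 1 <= b <= R -> 1 <= d <= R -> R * R <= 2 -> 0 <= t <= PI ->
  cos t * (2 * a * b) = a * a + b * b - d * d ->
  let A := asin (a/2) - PI/6 in let B := asin (b/2) - PI/6 in
  let U := asin (R/2) - PI/6 in
  PI/3 - (A + B) <= t <= PI/3 + 2 * U - (A + B).
Proof.
  intros Ha Hb Hd HR Ht Hc A B U.
  pose proof PI_bounds.
  destruct (asin_half_facts a ltac:(lra) ltac:(nra)) as [[Ha1 Ha2] _].
  destruct (asin_half_facts b ltac:(lra) ltac:(nra)) as [[Hb1 Hb2] _].
  destruct (asin_half_facts R ltac:(lra) HR) as [[HR1 HR2] _].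
  assert (HAU : A <= U) by (unfold A, U; apply Rplus_le_compat_r, asin_half_mono; lra).
  assert (HBU : B <= U) by (unfold B, U; apply Rplus_le_compat_r, asin_half_mono; lra).
  assert (HA0 : 0 <= A) by (unfold A; lra).
  assert (HB0 : 0 <= B) by (unfold B; lra).
  assert (HU : U <= PI/12) by (unfold U; lra).
  assert (Ea : a = cos A + sqrt 3 * sin A) by (apply two_sin_e; nra).
  assert (Eb : b = cos B + sqrt 3 * sin B) by (apply two_sin_e; nra).
  assert (ER : R = cos U + sqrt 3 * sin U) by (apply two_sin_e; nra).
  assert (Hab : 0 < a * b) by nra.
  assert (sA0 : 0 <= sin A) by (apply sin_ge_0; lra).
  assert (sB0 : 0 <= sin B) by (apply sin_ge_0; lra).
  split.
  -
    assert (Hsin : sin A <= sin (A + 2 * B)) by (apply sin_incr_1; lra).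
    assert (K : 2 * a * b * cos (PI/3 - A - B) = a * a + b * b - 1 - 4 * sin A * sin A
               + 4 * sin A * sin (A + 2 * B)).
    { replace (2 * a * b * cos (PI/3 - A - B)) with (a * b * (2 * cos (PI/3 - A - B))) by ring.
      rewrite cos_pi3_AB, sin_A2B.
      pose proof (id1 (sin A) (cos A) (sin B) (cos B) (sqrt 3) (pyth A) (pyth B) r3sq) as I.
      rewrite Ea, Eb. lra. }
    assert (Hcc : cos t <= cos (PI/3 - A - B)).
    { apply (Rmult_le_reg_r (2 * a * b)); [lra|]. rewrite Hc.
      replace (cos (PI/3 - A - B) * (2 * a * b)) with (2 * a * b * cos (PI/3 - A - B)) by ring.
      rewrite K. nra. }
    assert (T := cos_decr_0 t (PI/3 - A - B) ltac:(lra) ltac:(lra) ltac:(lra) ltac:(lra) Hcc).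
    lra.
  -
    set (T := PI/3 + 2 * U - (A + B)).
    set (p := U - A - PI/3).
    assert (E1 := G_id a b T p).
    assert (Tp : T - p = PI/3 + PI/3 + (U - B)) by (unfold T, p; ring).
    rewrite Tp in E1.
    assert (L1 : 2 * (a * cos p) = R + 4 * sin A * sin (U - A)).
    { unfold p. replace (U - A - PI/3) with ((U - A) - PI/3) by ring.
      replace (2 * (a * cos (U - A - PI / 3))) with (a * (2 * cos (U - A - PI/3))) by ring.
      rewrite cos_m_pi3, Ea, ER. apply key_id. }
    assert (L2 : - 2 * (b * cos (PI/3 + PI/3 + (U - B))) = R + 4 * sin B * sin (U - B)).
    { replace (- 2 * (b * cos (PI/3 + PI/3 + (U - B)))) with (- (b * (2 * cos (PI/3 + PI/3 + (U - B))))) by ring.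
      rewrite cos_2pi3_plus, Eb, ER.
      rewrite <- key_id. ring. }
    assert (sUA : 0 <= sin (U - A)) by (apply sin_ge_0; lra).
    assert (sUB : 0 <= sin (U - B)) by (apply sin_ge_0; lra).
    assert (Hlin : R <= a * cos p - b * cos (PI/3 + PI/3 + (U - B))) by nra.
    assert (Hq : R * R <= a * a + b * b - 2 * a * b * cos T).
    { rewrite E1.
      set (X1 := a * cos p - b * cos (PI / 3 + PI / 3 + (U - B))) in *.
      set (Y1 := a * sin p + b * sin (PI / 3 + PI / 3 + (U - B))).
      assert (0 <= Y1 ^ 2) by apply pow2_ge_0.
      assert (R * R <= X1 ^ 2) by (simpl; nra). lra. }
    assert (Hcc : cos T <= cos t).
    { apply (Rmult_le_reg_r (2 * a * b)); [lra|]. rewrite Hc. nra. }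
    assert (HT : 0 <= T <= PI) by (unfold T; lra).
    assert (X := cos_decr_0 T t ltac:(lra) ltac:(lra) ltac:(lra) ltac:(lra) Hcc).
    exact X.
Qed.

Lemma per_step_V a b d R t :
  1 <= a <= R -> 1 <= b <= R -> 1 <= d <= R -> R * R <= 2 ->
  cos t * (2 * a * b) = a * a + b * b - d * d ->
  cos t * (2 * R * R) <= 2 * R * R - 1.
Proof.
  intros Ha Hb Hd HR Hc.
  assert (Hab : 0 < a * b) by nra.
  assert (Q0 : R * R - R - 1 <= 0) by nra.
  assert (Q1 : 0 <= 2*R*R - 1 - R*R*R).
  { replace (2*R*R - 1 - R*R*R) with (- ((R - 1) * (R * R - R - 1))) by ring.
    assert (0 <= R - 1) by lra. nra. }
  assert (F1 : forall y, 1 <= y <= R -> 0 <= y * (2*R*R-1) - R*R*y*y).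
  { intros y Hy. replace (y * (2*R*R-1) - R*R*y*y) with (y * ((2*R*R - 1 - R*R*R) + R*R*(R - y))) by ring.
    assert (0 <= R*R*(R-y)) by (assert (0 <= R - y) by lra; nra). nra. }
  assert (FR : forall y, 1 <= y <= R -> 0 <= R * y * (2*R*R-1) - R*R*(R*R + y*y - 1)).
  { intros y Hy.
    destruct (Req_dec R 1) as [E|E]; [subst; assert (y = 1) by lra; subst; nra|].
    assert (HR1 : 0 < R - 1) by lra.
    apply (Rmult_le_reg_l (R - 1)); [exact HR1|]. rewrite Rmult_0_r.
    replace ((R - 1) * (R * y * (2*R*R-1) - R*R*(R*R + y*y - 1))) with
      (R * ((2*R*R - 1 - R*R*R) * (R - y) + R * (R - 1) * ((y - 1) * (R - y)))) by ring.
    assert (0 <= (y - 1) * (R - y)) by (apply Rmult_le_pos; lra).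
    assert (0 <= (2*R*R - 1 - R*R*R) * (R - y)) by (apply Rmult_le_pos; lra).
    assert (0 <= R * (R - 1) * ((y - 1) * (R - y))) by (apply Rmult_le_pos; [apply Rmult_le_pos|]; lra).
    apply Rmult_le_pos; lra. }
  assert (F : 0 <= a * b * (2*R*R-1) - R*R*(a*a+b*b-1)).
  { destruct (Req_dec R 1) as [E|E].
    - subst. nra.
    - assert (Hb1 := F1 b Hb). assert (Hb2 := FR b Hb).
      assert (HR1 : 1 < R) by lra.
      assert (Key : (R - 1) * (a * b * (2*R*R-1) - R*R*(a*a+b*b-1)) =
         (R - a) * (b * (2*R*R-1) - R*R*b*b) + (a - 1) * (R * b * (2*R*R-1) - R*R*(R*R + b*b - 1))
         + R*R*(R-1)*(a-1)*(R-a)) by ring.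
      assert (0 <= (R - 1) * (a * b * (2*R*R-1) - R*R*(a*a+b*b-1))).
      { rewrite Key.
        assert (0 <= (R - a) * (b * (2*R*R-1) - R*R*b*b)) by (apply Rmult_le_pos; lra).
        assert (0 <= (a - 1) * (R * b * (2*R*R-1) - R*R*(R*R + b*b - 1))) by (apply Rmult_le_pos; lra).
        assert (0 <= R*R*(R-1)*(a-1)*(R-a)).
        { repeat apply Rmult_le_pos; nra. }
        lra. }
      apply (Rmult_le_reg_l (R - 1)); lra. }
  assert (Hc' : cos t * (2 * a * b) <= a * a + b * b - 1) by nra.
  assert (Hc2 : cos t * (2 * a * b) * (R * R) <= (a * a + b * b - 1) * (R * R))
    by (apply Rmult_le_compat_r; nra).
  apply (Rmult_le_reg_l (a * b)); [exact Hab|]. nra.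
Qed.

Lemma step_angle (xj yj xp yp : R) :
  let Re := xj * xp + yj * yp in let Im := yj * xp - xj * yp in
  0 < Re ->
  let rj := sqrt (xj ^ 2 + yj ^ 2) in let rp := sqrt (xp ^ 2 + yp ^ 2) in
  cos (atan (Im / Re)) * (rj * rp) = Re /\ sin (atan (Im / Re)) * (rj * rp) = Im.
Proof.
  intros Re Im HRe rj rp.
  assert (Hl : Re * Re + Im * Im = (xj ^ 2 + yj ^ 2) * (xp ^ 2 + yp ^ 2)) by (unfold Re, Im; ring).
  assert (Hrr : rj * rp = sqrt (Re * Re + Im * Im)).
  { unfold rj, rp. rewrite Hl, sqrt_mult; [reflexivity| |]; nra. }
  assert (Hs : sqrt (1 + (Im / Re)²) = sqrt (Re * Re + Im * Im) / Re).
  { replace (1 + (Im / Re)²) with ((Re * Re + Im * Im) / (Re * Re)) by (unfold Rsqr; field; lra).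
    rewrite sqrt_div_alt by nra. rewrite sqrt_square by lra. reflexivity. }
  assert (Hpos : 0 < sqrt (Re * Re + Im * Im)) by (apply sqrt_lt_R0; nra).
  rewrite cos_atan, sin_atan, Hs, Hrr. split; field; lra.
Qed.

Definition rotx (t u v : R) := cos t * u - sin t * v.
Definition roty (t u v : R) := sin t * u + cos t * v.

Lemma rot_comp a b u v :
  rotx a (rotx b u v) (roty b u v) = rotx (a + b) u v /\
  roty a (rotx b u v) (roty b u v) = roty (a + b) u v.
Proof. unfold rotx, roty. rewrite cos_plus, sin_plus. split; ring. Qed.

Lemma rot_fixed s u v : u * u + v * v = 1 -> rotx s u v = u -> roty s u v = v ->
  cos s = 1 /\ sin s = 0.
Proof.
  unfold rotx, roty. intros H1 H2 H3.
  assert (cos s * (u * u + v * v) = u * u + v * v).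
  { replace (cos s * (u * u + v * v)) with (u * (cos s * u - sin s * v) + v * (sin s * u + cos s * v)) by ring.
    rewrite H2, H3. ring. }
  assert (sin s * (u * u + v * v) = 0).
  { replace (sin s * (u * u + v * v)) with (u * (sin s * u + cos s * v) - v * (cos s * u - sin s * v)) by ring.
    rewrite H2, H3. ring. }
  rewrite H1 in *. lra.
Qed.

Lemma winding n (theta u v : nat -> R) : (1 <= n)%nat ->
  (forall j, (j < n)%nat -> u j * u j + v j * v j = 1) ->
  (forall j, (j < n)%nat -> u j = rotx (theta j) (u (prv n j)) (v (prv n j)) /\
                          v j = roty (theta j) (u (prv n j)) (v (prv n j))) ->
  exists k : Z, rsum theta (seq 0 n) = 2 * IZR k * PI.
Proof.
  intros Hn Hu Hrot.
  assert (Hind : forall m, (m < n)%nat ->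
    u m = rotx (rsum theta (seq 1 m)) (u 0%nat) (v 0%nat) /\
    v m = roty (rsum theta (seq 1 m)) (u 0%nat) (v 0%nat)).
  { induction m as [|m IH]; intros Hm.
    - simpl. unfold rsum; simpl. unfold rotx, roty. rewrite cos_0, sin_0. split; ring.
    - destruct (IH ltac:(lia)) as [E1 E2].
      destruct (Hrot (S m) Hm) as [F1 F2]. simpl prv in F1, F2.
      rewrite F1, F2, E1, E2.
      destruct (rot_comp (theta (S m)) (rsum theta (seq 1 m)) (u 0%nat) (v 0%nat)) as [G1 G2].
      rewrite G1, G2.
      rewrite seq_S, rsum_app.
      change (rsum theta ((1 + m)%nat :: nil)) with (theta (S m) + 0).
      replace (rsum theta (seq 1 m) + (theta (S m) + 0)) with (theta (S m) + rsum theta (seq 1 m)) by ring.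
      split; reflexivity. }
  destruct n as [|n']; [lia|].
  destruct (Hind n' ltac:(lia)) as [E1 E2].
  destruct (Hrot 0%nat ltac:(lia)) as [F1 F2].
  assert (Hp0 : prv (S n') 0 = n') by (simpl; lia). rewrite Hp0 in F1, F2.
  rewrite E1, E2 in F1, F2.
  destruct (rot_comp (theta 0%nat) (rsum theta (seq 1 n')) (u 0%nat) (v 0%nat)) as [G1 G2].
  rewrite G1 in F1. rewrite G2 in F2.
  assert (Hsum : rsum theta (seq 0 (S n')) = theta 0%nat + rsum theta (seq 1 n')) by reflexivity.
  rewrite <- Hsum in F1, F2.
  destruct (rot_fixed _ _ _ (Hu 0%nat ltac:(lia)) (eq_sym F1) (eq_sym F2)) as [C Sn].
  set (s := rsum theta (seq 0 (S n'))) in *.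
  assert (Hh : sin (s / 2) = 0).
  { replace s with (2 * (s / 2)) in C by field. rewrite cos_2a_sin in C.
    assert (sin (s/2) * sin (s/2) = 0) by lra.
    destruct (Rmult_integral _ _ H); assumption. }
  destruct (sin_eq_0_0 _ Hh) as [k Hk]. exists k. lra.
Qed.

Definition zsum (f : nat -> Z) (l : list nat) : Z := fold_right Z.add 0%Z (map f l).

Lemma rsum_IZR f l : rsum (fun j => IZR (f j)) l = IZR (zsum f l).
Proof. induction l as [|a l IH]; unfold rsum, zsum in *; simpl; [reflexivity|].
  rewrite IH, plus_IZR. reflexivity. Qed.

Lemma zsum_parity f l : (forall i, In i l -> f i = 1%Z \/ f i = (-1)%Z) ->
  exists c, zsum f l = (Z.of_nat (length l) - 2 * c)%Z.
Proof.
  induction l as [|a l IH]; intros H; [exists 0%Z; reflexivity|].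
  destruct IH as [c Hc]. { intros i Hi; apply H; right; exact Hi. }
  unfold zsum in *. cbn [fold_right map length]. rewrite Hc.
  destruct (H a (or_introl eq_refl)) as [Ea|Ea]; rewrite Ea;
  [exists c | exists (c + 1)%Z]; lia.
Qed.

Lemma pm1 (x : R) : x = 1 \/ x = -1 -> x * x = 1.
Proof. intros [-> | ->]; ring. Qed.

Lemma key_bound n (th e s : nat -> R) U : (1 <= n)%nat ->
  (forall j, (j < n)%nat -> 0 <= e j <= U) ->
  (forall j, (j < n)%nat -> PI/3 - (e (prv n j) + e j) <= Rabs (th j) <= PI/3 + 2 * U - (e (prv n j) + e j)) ->
  (forall j, s j = 1 \/ s j = -1) ->
  rsum (fun j => s j * (Rabs (th j) - PI/3)) (seq 0 n)
    <= 2 * U * INR n - U / 2 * rsum (fun j => Rabs (s j - s (prv n j))) (seq 0 n).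
Proof.
  intros Hn He Hb Hs.
  assert (Hprv : forall j, (j < n)%nat -> (prv n j < n)%nat) by (intros j Hj; destruct j; simpl; lia).
  eapply Rle_trans.
  - apply (rsum_le _ (fun j => (1 + s j) * U - s j * e (prv n j) - s j * e j)).
    intros j Hj. apply in_seq in Hj. destruct (Hb j ltac:(lia)) as [B1 B2].
    destruct (Hs j) as [E|E]; rewrite E; lra.
  - assert (Eq : rsum (fun j => (1 + s j) * U - s j * e (prv n j) - s j * e j) (seq 0 n) =
                 rsum (fun j => (1 + s j) * U - s j * e (prv n j) - s (prv n j) * e (prv n j)) (seq 0 n)).
    { rewrite !(rsum_minus (fun j => (1 + s j) * U - s j * e (prv n j))).
      rewrite <- (rsum_prv n (fun j => s j * e j)) by lia. reflexivity. }
    rewrite Eq.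
    eapply Rle_trans.
    + apply (rsum_le _ (fun j => 2 * U + U / 2 * (s j - s (prv n j)) - U / 2 * Rabs (s j - s (prv n j)))).
      intros j Hj. apply in_seq in Hj. assert (Hpj := Hprv j ltac:(lia)).
      destruct (He (prv n j) Hpj) as [E1 E2].
      destruct (Hs j) as [F|F]; destruct (Hs (prv n j)) as [G|G]; rewrite F, G;
      try (replace (1 - 1) with 0 by ring); try (replace (-1 - -1) with 0 by ring);
      try (replace (1 - -1) with 2 by ring); try (replace (-1 - 1) with (-2) by ring);
      rewrite ?Rabs_R0, ?(Rabs_pos_eq 2), ?Rabs_Ropp, ?(Rabs_pos_eq 2) by lra;
      try (rewrite Rabs_left by lra); lra.
    + rewrite rsum_minus, rsum_plus, rsum_const, length_seq, !rsum_scal, rsum_minus.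
      rewrite (rsum_prv n s) by lia. lra.
Qed.

Lemma abs_sum_ge4 n (s : nat -> R) j0 : (1 <= n)%nat -> (j0 < n)%nat ->
  (forall j, s j = 1 \/ s j = -1) -> s j0 <> s (prv n j0) ->
  4 <= rsum (fun j => Rabs (s j - s (prv n j))) (seq 0 n).
Proof.
  intros Hn Hj0 Hs Hne.
  set (D := fun j => s j - s (prv n j)).
  assert (HD0 : Rabs (D j0) = 2).
  { unfold D. destruct (Hs j0) as [E|E]; destruct (Hs (prv n j0)) as [F|F]; rewrite E, F in *;
    try lra.
    - replace (1 - -1) with 2 by ring. apply Rabs_pos_eq; lra.
    - replace (-1 - 1) with (-2) by ring. rewrite Rabs_left by lra. lra. }
  assert (Hsum : rsum D (seq 0 n) = 0).
  { unfold D. rewrite rsum_minus, (rsum_prv n s) by lia. ring. }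
  set (I := fun j => if Nat.eqb j j0 then D j0 else 0).
  assert (HI : rsum I (seq 0 n) = D j0) by (apply rsum_ind_in; exact Hj0).
  assert (HIa : rsum (fun j => Rabs (I j)) (seq 0 n) = 2).
  { rewrite (rsum_ext _ (fun j => if Nat.eqb j j0 then 2 else 0)).
    - apply rsum_ind_in; exact Hj0.
    - intros j _. unfold I. destruct (Nat.eqb j j0); [exact HD0|apply Rabs_R0]. }
  assert (Hsplit : rsum (fun j => Rabs (D j)) (seq 0 n) =
     rsum (fun j => Rabs (D j - I j)) (seq 0 n) + rsum (fun j => Rabs (I j)) (seq 0 n)).
  { rewrite <- rsum_plus. apply rsum_ext. intros j _. unfold I.
    destruct (Nat.eqb_spec j j0) as [->|_].
    - replace (D j0 - D j0) with 0 by ring. rewrite Rabs_R0. ring.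
    - replace (D j - 0) with (D j) by ring. rewrite Rabs_R0. ring. }
  assert (Hdi : Rabs (rsum (fun j => D j - I j) (seq 0 n)) = 2).
  { rewrite rsum_minus, Hsum, HI. replace (0 - D j0) with (- D j0) by ring. rewrite Rabs_Ropp. exact HD0. }
  pose proof (rsum_abs (fun j => D j - I j) (seq 0 n)).
  change (rsum (fun j => Rabs (s j - s (prv n j))) (seq 0 n)) with (rsum (fun j => Rabs (D j)) (seq 0 n)).
  lra.
Qed.

Lemma uniform_signs n (s : nat -> R) : (forall j, (j < n)%nat -> s j = s (prv n j)) ->
  forall j, (j < n)%nat -> s j = s 0%nat.
Proof.
  intros H j. induction j as [|j IH]; intros Hj; [reflexivity|].
  rewrite (H (S j) Hj). simpl. apply IH. lia.
Qed.

Definition sgnz (x : R) : Z := if Rle_dec 0 x then 1%Z else (-1)%Z.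

Lemma sgnz_spec x : (sgnz x = 1%Z \/ sgnz x = (-1)%Z) /\ x = IZR (sgnz x) * Rabs x.
Proof.
  unfold sgnz. destruct (Rle_dec 0 x) as [H|H].
  - split; [left; reflexivity|]. rewrite Rabs_pos_eq by exact H. ring.
  - split; [right; reflexivity|]. rewrite Rabs_left by lra. simpl. ring.
Qed.

Lemma core n (th e : nat -> R) U k : (3 <= n)%nat -> Nat.odd n = true ->
  (forall j, (j < n)%nat -> 0 <= e j <= U) ->
  (forall j, (j < n)%nat -> PI/3 - (e (prv n j) + e j) <= Rabs (th j) <= PI/3 + 2 * U - (e (prv n j) + e j)) ->
  rsum th (seq 0 n) = 2 * IZR k * PI ->
  PI/3 <= 2 * U * (INR n - 1) \/
  exists c N : Z, (c = 1 \/ c = -1)%Z /\ N = (6 * k - c * Z.of_nat n)%Z /\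
     rsum (fun j => Rabs (th j) - PI/3) (seq 0 n) = IZR c * IZR N * (PI / 3) /\
     Rabs (rsum (fun j => Rabs (th j) - PI/3) (seq 0 n)) <= 2 * U * INR n.
Proof.
  intros Hn Hodd He Hb Hk.
  set (sz := fun j => sgnz (th j)).
  set (s := fun j => IZR (sz j)).
  assert (Hs : forall j, s j = 1 \/ s j = -1).
  { intros j. unfold s, sz. destruct (sgnz_spec (th j)) as [[E|E] _]; rewrite E; [left|right]; reflexivity. }
  assert (Hth : forall j, th j = s j * (PI/3) + s j * (Rabs (th j) - PI/3)).
  { intros j. unfold s, sz. destruct (sgnz_spec (th j)) as [_ E]. rewrite E at 1. ring. }
  set (S := rsum (fun j => s j * (Rabs (th j) - PI/3)) (seq 0 n)).
  assert (HS : rsum th (seq 0 n) = IZR (zsum sz (seq 0 n)) * (PI/3) + S).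
  { rewrite (rsum_ext th (fun j => s j * (PI/3) + s j * (Rabs (th j) - PI/3))) by (intros; apply Hth).
    rewrite rsum_plus. unfold S. f_equal.
    rewrite (rsum_ext _ (fun j => PI/3 * IZR (sz j))) by (intros; unfold s; ring).
    rewrite rsum_scal, rsum_IZR. ring. }
  destruct (zsum_parity sz (seq 0 n)) as [c0 Hc0].
  { intros i _. unfold sz. apply sgnz_spec. }
  rewrite length_seq in Hc0.
  set (N := (6 * k - zsum sz (seq 0 n))%Z).
  assert (HN : S = IZR N * (PI / 3)).
  { unfold N. rewrite minus_IZR, mult_IZR. simpl (IZR 6). lra. }
  assert (HNodd : (N <> 0)%Z).
  { unfold N. rewrite Hc0. apply Nat.odd_spec in Hodd. destruct Hodd as [m Hm]. rewrite Hm. lia. }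
  assert (KB1 := key_bound n th e s U ltac:(lia) He Hb Hs).
  assert (KB2 := key_bound n th e (fun j => - s j) U ltac:(lia) He Hb
                   ltac:(intros j; destruct (Hs j) as [E|E]; rewrite E; [right|left]; ring)).
  rewrite (rsum_ext (fun j => - s j * (Rabs (th j) - PI/3)) (fun j => - (s j * (Rabs (th j) - PI/3))))
    in KB2 by (intros; ring).
  rewrite rsum_opp in KB2.
  rewrite (rsum_ext (fun j => Rabs (- s j - - s (prv n j))) (fun j => Rabs (s j - s (prv n j))))
    in KB2 by (intros; replace (- s i - - s (prv n i)) with (- (s i - s (prv n i))) by ring; apply Rabs_Ropp).
  fold S in KB1, KB2.
  assert (HU : 0 <= U) by (destruct (He 0%nat ltac:(lia)); lra).
  assert (HAbs : 0 <= rsum (fun j => Rabs (s j - s (prv n j))) (seq 0 n)).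
  { rewrite <- (rsum_zero (seq 0 n)). apply rsum_le. intros; apply Rabs_pos. }
  assert (HNabs : PI / 3 <= Rabs S).
  { rewrite HN, Rabs_mult, (Rabs_pos_eq (PI/3)) by (pose proof PI_RGT_0; lra).
    assert (1 <= Rabs (IZR N)).
    { rewrite <- abs_IZR. apply IZR_le. lia. }
    pose proof PI_RGT_0. nra. }
  destruct (classic (exists j0, (j0 < n)%nat /\ s j0 <> s (prv n j0))) as [[j0 [Hj0 Hne]]|Hall].
  - left. assert (H4 := abs_sum_ge4 n s j0 ltac:(lia) Hj0 Hs Hne).
    assert (Habs : Rabs S <= 2 * U * INR n - 2 * U).
    { apply Rabs_le. split; nra. }
    assert (INR n - 1 >= 0) by (assert (1 <= INR n) by (apply (le_INR 1); lia); lra). nra.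
  - right.
    assert (Hu : forall j, (j < n)%nat -> s j = s 0%nat).
    { apply uniform_signs. intros j Hj. destruct (Req_dec (s j) (s (prv n j))) as [E|E]; [exact E|].
      exfalso. apply Hall. exists j. split; assumption. }
    exists (sz 0%nat), N. split; [unfold sz; apply sgnz_spec|].
    assert (Hz : zsum sz (seq 0 n) = (sz 0%nat * Z.of_nat n)%Z).
    { apply eq_IZR. rewrite <- rsum_IZR. rewrite mult_IZR, <- INR_IZR_INZ.
      rewrite (rsum_ext _ (fun _ => IZR (sz 0%nat))).
      - rewrite rsum_const, length_seq. ring.
      - intros j Hj. apply in_seq in Hj. apply (Hu j). lia. }
    split; [unfold N; rewrite Hz; ring|].
    assert (HS2 : S = s 0%nat * rsum (fun j => Rabs (th j) - PI/3) (seq 0 n)).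
    { unfold S. rewrite <- rsum_scal. apply rsum_ext. intros j Hj. apply in_seq in Hj.
      rewrite (Hu j) by lia. reflexivity. }
    assert (Hs0 : s 0%nat * s 0%nat = 1) by (apply pm1, Hs).
    split.
    + replace (rsum (fun j => Rabs (th j) - PI/3) (seq 0 n)) with (s 0%nat * S) by (rewrite HS2, <- Rmult_assoc, Hs0; ring).
      rewrite HN. fold (s 0%nat). ring.
    + assert (Hx : Rabs (rsum (fun j => Rabs (th j) - PI / 3) (seq 0 n)) = Rabs S).
      { rewrite HS2, Rabs_mult. destruct (Hs 0%nat) as [E|E]; rewrite E;
        [rewrite Rabs_R1|rewrite (Rabs_left (-1)) by lra]; ring. }
      rewrite Hx. apply Rabs_le. split; nra.
Qed.

Lemma cos_ub2 a : 0 <= a <= 1 -> cos a <= 1 - a*a/2 + a*a*a*a/24.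
Proof.
  intros H. pose proof PI_bounds.
  destruct (cos_bound a 0 ltac:(lra) ltac:(lra)) as [_ H2].
  unfold cos_approx, cos_term in H2. simpl in H2.
  unfold INR in H2. simpl in H2. lra.
Qed.

Lemma sin_lb1 a : 0 <= a <= 1 -> a - a*a*a/6 <= sin a.
Proof.
  intros H. pose proof PI_bounds.
  destruct (sin_bound a 0 ltac:(lra) ltac:(lra)) as [H1 _].
  unfold sin_approx, sin_term in H1. simpl in H1.
  unfold INR in H1. simpl in H1. lra.
Qed.

Lemma sin_ub1 a : 0 <= a <= 1 -> sin a <= a.
Proof.
  intros H. pose proof PI_bounds.
  destruct (sin_bound a 0 ltac:(lra) ltac:(lra)) as [_ H2].
  unfold sin_approx, sin_term in H2. simpl in H2.
  unfold INR in H2. simpl in H2.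
  assert (a*a <= 1) by nra.
  assert (0 <= a*a*a) by (repeat apply Rmult_le_pos; lra).
  assert (a*a*a*a*a/120 <= a*a*a/6).
  { replace (a*a*a*a*a) with ((a*a*a)*(a*a)) by ring. nra. }
  lra.
Qed.
Lemma ml a b c d : 0 <= a -> a <= b -> 0 <= c -> c <= d -> a * c <= b * d.
Proof. intros. apply Rmult_le_compat; assumption. Qed.
Lemma mp a b : 0 <= a -> 0 <= b -> 0 <= a * b.
Proof. apply Rmult_le_pos. Qed.

Lemma T1b x y : 0 < y -> y <= x -> 6 * x <= 7 * y -> x <= 1/9 ->
  y*y*y/6 - x*y*y/2 + x*y*y*y*y/24 + x*x*y/2 - x*x*y*y*y/12 - x*x*x*x*y/24 + x*x*x*x*y*y*y/144 <= x*y/20.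
Proof.
  intros H1 H2 H3 H4.
  assert (y0 : 0 <= y) by lra. assert (x0 : 0 <= x) by lra.
  assert (m0 : 0 <= x*y) by (apply mp; lra).
  assert (yy : y*y <= x*y) by (apply ml; lra).
  assert (A1 : (y*y)*y <= (x*y)*(1/9)) by (apply ml; try apply mp; lra).
  assert (A2 : (x*y)*(x-y) <= (x*y)*(1/54)) by (apply ml; lra).
  assert (y2 : y*y <= (1/9)*(1/9)) by (apply ml; lra).
  assert (y3 : (y*y)*y <= ((1/9)*(1/9))*(1/9)) by (apply ml; try apply mp; lra).
  assert (A3 : (x*y)*((y*y)*y) <= (x*y)*(((1/9)*(1/9))*(1/9))) by (apply ml; try apply mp; try apply mp; lra).
  assert (A4 : 0 <= x*x*y*y*y) by (repeat apply mp; lra).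
  assert (A5 : 0 <= x*x*x*x*y) by (repeat apply mp; lra).
  assert (x2 : x*x <= (1/9)*(1/9)) by (apply ml; lra).
  assert (x3 : (x*x)*x <= ((1/9)*(1/9))*(1/9)) by (apply ml; try apply mp; lra).
  assert (x3y2 : ((x*x)*x)*(y*y) <= (((1/9)*(1/9))*(1/9))*((1/9)*(1/9))) by (apply ml; try apply mp; try apply mp; lra).
  assert (A6 : (x*y)*(((x*x)*x)*(y*y)) <= (x*y)*((((1/9)*(1/9))*(1/9))*((1/9)*(1/9)))) by (apply ml; try (repeat apply mp); lra).
  assert (Eq1 : y*y*y/6 - x*y*y/2 + x*y*y*y*y/24 + x*x*y/2 - x*x*y*y*y/12 - x*x*x*x*y/24 + x*x*x*x*y*y*y/144
     = (y*y)*y/6 + (x*y)*(x-y)/2 + (x*y)*((y*y)*y)/24 - x*x*y*y*y/12 - x*x*x*x*y/24 + (x*y)*(((x*x)*x)*(y*y))/144) by field.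
  rewrite Eq1. lra.
Qed.

Lemma T0b x y : 0 < y -> y <= x -> 6 * x <= 7 * y -> x <= 1/9 ->
  y*y*y*y/24 + x*y*y*y/2 + x*x*y*y/4 - x*x*y*y*y*y/48 + x*x*x*x/24 - x*x*x*x*y*y/48 + x*x*x*x*y*y*y*y/576 <= x*y/20.
Proof.
  intros H1 H2 H3 H4.
  assert (y0 : 0 <= y) by lra. assert (x0 : 0 <= x) by lra.
  assert (m0 : 0 <= x*y) by (apply mp; lra).
  assert (m1 : x*y <= (1/9)*(1/9)) by (apply ml; lra).
  assert (yy : y*y <= x*y) by (apply ml; lra).
  assert (y2 : y*y <= (1/9)*(1/9)) by (apply ml; lra).
  assert (x2 : x*x <= (1/9)*(1/9)) by (apply ml; lra).
  assert (B1 : (x*y)*(y*y) <= (x*y)*((1/9)*(1/9))) by (apply ml; try apply mp; lra).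
  assert (B0 : (y*y)*(y*y) <= (x*y)*((1/9)*(1/9))) by (apply ml; try apply mp; lra).
  assert (B3 : (x*y)*(x*y) <= (x*y)*((1/9)*(1/9))) by (apply ml; lra).
  assert (B4 : 0 <= x*x*y*y*y*y) by (repeat apply mp; lra).
  assert (xx : x*x <= x*(2*y)) by (apply ml; lra).
  assert (B5 : (x*x)*(x*x) <= (x*(2*y))*((1/9)*(1/9))) by (apply ml; try apply mp; lra).
  assert (B6 : 0 <= x*x*x*x*y*y) by (repeat apply mp; lra).
  assert (mm : (x*y)*(x*y) <= ((1/9)*(1/9))*((1/9)*(1/9))) by (apply ml; lra).
  assert (mmm : ((x*y)*(x*y))*(x*y) <= (((1/9)*(1/9))*((1/9)*(1/9)))*((1/9)*(1/9))) by (apply ml; try apply mp; lra).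
  assert (B7 : (x*y)*(((x*y)*(x*y))*(x*y)) <= (x*y)*((((1/9)*(1/9))*((1/9)*(1/9)))*((1/9)*(1/9)))) by (apply ml; try (repeat apply mp); lra).
  assert (Eq1 : y*y*y*y/24 + x*y*y*y/2 + x*x*y*y/4 - x*x*y*y*y*y/48 + x*x*x*x/24 - x*x*x*x*y*y/48 + x*x*x*x*y*y*y*y/576
    = (y*y)*(y*y)/24 + (x*y)*(y*y)/2 + (x*y)*(x*y)/4 - x*x*y*y*y*y/48 + (x*x)*(x*x)/24 - x*x*x*x*y*y/48 + (x*y)*(((x*y)*(x*y))*(x*y))/576) by field.
  rewrite Eq1. lra.
Qed.

Lemma poly_ineq x y r3 : 0 < y -> y <= x -> 6 * x <= 7 * y -> x <= 1/9 ->
  r3 * r3 = 3 -> 17/10 <= r3 <= 7/4 -> r3 * (x - y) <= 7/2 * (x * y) ->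
  (1 - x*x/2 + x*x*x*x/24 + r3*x) * (1 - y*y/2 + y*y*y*y/24 - r3*(y - y*y*y/6)) <= 1.
Proof.
  intros H1 H2 H3 H4 Hr Hr2 Hd.
  set (T1 := y*y*y/6 - x*y*y/2 + x*y*y*y*y/24 + x*x*y/2 - x*x*y*y*y/12 - x*x*x*x*y/24 + x*x*x*x*y*y*y/144).
  set (T0 := y*y*y*y/24 + x*y*y*y/2 + x*x*y*y/4 - x*x*y*y*y*y/48 + x*x*x*x/24 - x*x*x*x*y*y/48 + x*x*x*x*y*y*y*y/576).
  assert (Eq1 : (1 - x*x/2 + x*x*x*x/24 + r3*x) * (1 - y*y/2 + y*y*y*y/24 - r3*(y - y*y*y/6)) - 1
     = r3*(x-y) - 3*(x*y) - (x*x+y*y)/2 + r3*T1 + T0 + (r3*r3 - 3)*(- (x*y) + x*y*y*y/6)).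
  { unfold T1, T0. field. }
  rewrite Hr in Eq1. replace (3 - 3) with 0 in Eq1 by ring.
  assert (B1 := T1b x y H1 H2 H3 H4). fold T1 in B1.
  assert (B0 := T0b x y H1 H2 H3 H4). fold T0 in B0.
  assert (Hsq : x*y <= (x*x+y*y)/2) by nra.
  assert (Hm : 0 <= x * y) by (apply mp; lra).
  assert (Hr1 : r3 * T1 <= 7/4 * (x*y/20)).
  { destruct (Rle_lt_dec 0 T1) as [P|P].
    - apply ml; lra.
    - assert (r3 * T1 <= 0) by nra. nra. }
  lra.
Qed.

Lemma r3_bounds : 17/10 <= sqrt 3 <= 7/4.
Proof.
  pose proof r3sq. assert (0 <= sqrt 3) by apply sqrt_pos. split; nra.
Qed.

Lemma trig_n1 (m : R) : 7 <= m ->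
  4 * sin (PI/6 + PI/(6*(m - 1))) * sin (PI/6 - PI/(6*m)) <= 1.
Proof.
  intros Hm. pose proof PI_bounds. pose proof r3_bounds. pose proof r3sq.
  set (x := PI/(6*(m-1))). set (y := PI/(6*m)).
  assert (Hy0 : 0 < y) by (unfold y; apply Rdiv_lt_0_compat; lra).
  assert (Hxy : y <= x).
  { unfold x, y. apply Rmult_le_compat_l; [lra|]. apply Rinv_le_contravar; lra. }
  assert (H67 : 6 * x <= 7 * y).
  { unfold x, y. unfold Rdiv. apply (Rmult_le_reg_r ((6*(m-1))*(6*m))); [nra|].
    replace (6 * (PI * / (6 * (m - 1))) * (6 * (m - 1) * (6 * m))) with (36 * PI * m) by (field; lra).
    replace (7 * (PI * / (6 * m)) * (6 * (m - 1) * (6 * m))) with (42 * PI * (m - 1)) by (field; lra).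
    nra. }
  assert (Hx9 : x <= 1/9).
  { unfold x. apply (Rmult_le_reg_r (6*(m-1))); [lra|]. unfold Rdiv.
    rewrite Rmult_assoc, Rinv_l by lra. lra. }
  assert (Hd : x - y = 6 / PI * (x * y)).
  { unfold x, y. field. lra. }
  assert (Hd2 : sqrt 3 * (x - y) <= 7/2 * (x * y)).
  { rewrite Hd. assert (6 / PI <= 2).
    { apply (Rmult_le_reg_r PI); [lra|]. unfold Rdiv. rewrite Rmult_assoc, Rinv_l by lra. lra. }
    assert (0 <= x * y) by (apply mp; lra). assert (0 <= 6 / PI) by (apply Rlt_le, Rdiv_lt_0_compat; lra).
    nra. }
  assert (P := poly_ineq x y (sqrt 3) Hy0 Hxy H67 Hx9 r3sq r3_bounds Hd2).
  assert (S1 : 2 * sin (PI/6 + x) = cos x + sqrt 3 * sin x) by apply sin_pi6_plus.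
  assert (S2 : 2 * sin (PI/6 - y) = cos y - sqrt 3 * sin y).
  { rewrite sin_minus, sin_PI6, cos_PI6. field. }
  assert (cx := cos_ub2 x ltac:(lra)). assert (sx := sin_ub1 x ltac:(lra)).
  assert (cy := cos_ub2 y ltac:(lra)). assert (sy := sin_lb1 y ltac:(lra)).
  assert (F1 : 0 <= 2 * sin (PI/6 + x)) by (assert (0 <= sin (PI/6 + x)) by (apply sin_ge_0; lra); lra).
  assert (F2 : 0 <= 2 * sin (PI/6 - y)) by (assert (0 <= sin (PI/6 - y)) by (apply sin_ge_0; lra); lra).
  assert (U1 : 2 * sin (PI/6 + x) <= 1 - x*x/2 + x*x*x*x/24 + sqrt 3 * x) by nra.
  assert (U2 : 2 * sin (PI/6 - y) <= 1 - y*y/2 + y*y*y*y/24 - sqrt 3 * (y - y*y*y/6)) by nra.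
  assert (Hp1 : 0 <= 1 - x*x/2 + x*x*x*x/24 + sqrt 3 * x) by lra.
  replace (4 * sin (PI / 6 + x) * sin (PI / 6 - y)) with ((2 * sin (PI/6 + x)) * (2 * sin (PI/6 - y))) by ring.
  eapply Rle_trans; [|exact P].
  apply ml; lra.
Qed.

Lemma cm_polar r a : 0 <= r -> cm (r * cos a) (r * sin a) = r.
Proof.
  intros H. unfold cm.
  replace ((r * cos a) ^ 2 + (r * sin a) ^ 2) with (r * r * (sin a * sin a + cos a * cos a)) by ring.
  rewrite pyth, Rmult_1_r. apply sqrt_square. exact H.
Qed.

Lemma cm_polar_diff r1 a1 r2 a2 :
  cm (r1 * cos a1 - r2 * cos a2) (r1 * sin a1 - r2 * sin a2) =
  sqrt (r1 * r1 + r2 * r2 - 2 * r1 * r2 * cos (a1 - a2)).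
Proof.
  unfold cm. f_equal. rewrite cos_minus.
  pose proof (pyth a1). pose proof (pyth a2). simpl. nra.
Qed.

Lemma cos_shift_period x k : cos (x - 2 * INR k * PI) = cos x.
Proof.
  rewrite <- (cos_period (x - 2 * INR k * PI) k). f_equal. ring.
Qed.

Lemma sqrt_between v R : 1 <= R -> 1 <= v <= R * R -> 1 <= sqrt v <= R.
Proof.
  intros HR Hv. split.
  - rewrite <- sqrt_1. apply sqrt_le_1_alt. lra.
  - rewrite <- (sqrt_square R) by lra. apply sqrt_le_1_alt. lra.
Qed.

Lemma polar_flow n RR (rad ang : nat -> R) : (3 <= n)%nat -> 1 <= RR ->
  (forall j, (j < n)%nat -> 1 <= rad j <= RR) ->
  (forall j, (j < n)%nat ->
     1 <= rad j * rad j + rad (prv n j) * rad (prv n j)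
          - 2 * rad j * rad (prv n j) * cos (ang j - ang (prv n j)) <= RR * RR) ->
  has_complex_nz_flow (wheel n) (1 + RR).
Proof.
  intros Hn HR Hrad Hd.
  apply (seq_to_flow n (1 + RR) (fun j => rad j * cos (ang j)) (fun j => rad j * sin (ang j)) Hn).
  intros j Hj. split.
  - rewrite cm_polar by (destruct (Hrad j Hj); lra). destruct (Hrad j Hj); lra.
  - rewrite cm_polar_diff. replace (1 + RR - 1) with RR by ring.
    apply sqrt_between; [exact HR|]. apply Hd; exact Hj.
Qed.

Lemma R_facts th : PI/6 <= th <= PI/2 ->
  1 <= 2 * sin th /\ 2 - 2 * cos (2 * th) = (2 * sin th) * (2 * sin th).
Proof.
  intros H. pose proof PI_bounds. split.
  - assert (sin (PI/6) <= sin th) by (apply sin_incr_1; lra). rewrite sin_PI6 in H1. lra.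
  - rewrite cos_2a_sin. ring.
Qed.

Lemma flow_even n : (3 <= n)%nat -> Nat.even n = true -> has_complex_nz_flow (wheel n) 2.
Proof.
  intros Hn He.
  replace 2 with (1 + 1) by ring.
  apply (polar_flow n 1 (fun _ => 1) (fun j => if Nat.even j then 0 else PI/3) Hn); [lra| intros; lra|].
  intros j Hj.
  assert (Hc : cos ((if Nat.even j then 0 else PI/3) - (if Nat.even (prv n j) then 0 else PI/3)) = 1/2).
  { assert (Hp : Nat.even (prv n j) = negb (Nat.even j)).
    { destruct j as [|k]; simpl prv.
      - replace (n - 1)%nat with (Nat.pred n) by lia. rewrite Nat.even_pred by lia.
        rewrite <- Nat.negb_even, He. reflexivity.
      - rewrite Nat.even_succ, <- Nat.negb_even, Bool.negb_involutive. reflexivity. }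
    rewrite Hp. destruct (Nat.even j); simpl.
    - replace (0 - PI/3) with (- (PI/3)) by ring. rewrite cos_neg. apply cos_PI3.
    - replace (PI/3 - 0) with (PI/3) by ring. apply cos_PI3. }
  rewrite Hc. split; nra.
Qed.

Lemma INR_6m n m r : n = (6 * m + r)%nat -> INR n = 6 * INR m + INR r.
Proof. intros ->. rewrite plus_INR, mult_INR. simpl. ring. Qed.

Lemma flow_5 n m : n = (6 * m + 5)%nat ->
  has_complex_nz_flow (wheel n) (1 + 2 * sin (PI / 6 * (INR (n + 1) / INR n))).
Proof.
  intros En. assert (Hn : (3 <= n)%nat) by lia.
  assert (HnR : INR n = 6 * INR m + 5) by (rewrite (INR_6m n m _ En); simpl (INR (S _)); ring).
  assert (Hm0 : 0 <= INR m) by apply pos_INR.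
  pose proof PI_bounds.
  set (th := PI / 6 * (INR (n + 1) / INR n)).
  assert (Hth : th = PI/6 + PI/(6 * INR n)).
  { unfold th. rewrite plus_INR. simpl (INR 1). field. lra. }
  assert (Hr : PI/6 <= th <= PI/2).
  { rewrite Hth. assert (0 <= PI/(6 * INR n) <= PI/3).
    { split; [apply Rlt_le, Rdiv_lt_0_compat; lra|].
      apply (Rmult_le_reg_r (6 * INR n)); [lra|]. unfold Rdiv. rewrite Rmult_assoc, Rinv_l by lra. nra. }
    lra. }
  destruct (R_facts th Hr) as [HR1 HR2].
  apply (polar_flow n (2 * sin th) (fun _ => 1) (fun j => INR j * (2 * th)) Hn HR1); [intros; lra|].
  intros j Hj.
  assert (Hc : cos (INR j * (2 * th) - INR (prv n j) * (2 * th)) = cos (2 * th)).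
  { destruct j as [|k]; simpl prv.
    - rewrite minus_INR by lia. simpl (INR 1).
      replace (INR 0 * (2 * th) - (INR n - 1) * (2 * th)) with (2 * th - 2 * INR (m + 1) * PI).
      + apply cos_shift_period.
      + rewrite plus_INR. simpl (INR 0). simpl (INR 1). rewrite Hth, HnR. field. lra.
    - rewrite S_INR. f_equal. ring. }
  rewrite Hc. split; nra.
Qed.

Lemma flow_1 n m : n = (6 * m + 1)%nat -> (3 <= n)%nat ->
  has_complex_nz_flow (wheel n) (1 + 2 * sin (PI / 6 * (INR n / INR (n - 1)))).
Proof.
  intros En Hn.
  assert (HnR : INR n = 6 * INR m + 1) by (rewrite (INR_6m n m _ En); simpl (INR (S _)); ring).
  assert (Hm1 : 1 <= INR m) by (assert (1 <= m)%nat by lia; apply (le_INR 1); lia).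
  pose proof PI_bounds.
  assert (Hn1 : INR (n - 1) = INR n - 1) by (rewrite minus_INR by lia; reflexivity).
  set (th := PI / 6 * (INR n / INR (n - 1))).
  assert (Hth : th = PI/6 + PI/(6 * (INR n - 1))).
  { unfold th. rewrite Hn1. field. lra. }
  assert (Hr : PI/6 <= th <= PI/2).
  { rewrite Hth. assert (0 <= PI/(6 * (INR n - 1)) <= PI/3).
    { split; [apply Rlt_le, Rdiv_lt_0_compat; lra|].
      apply (Rmult_le_reg_r (6 * (INR n - 1))); [lra|]. unfold Rdiv. rewrite Rmult_assoc, Rinv_l by lra. nra. }
    lra. }
  destruct (R_facts th Hr) as [HR1 HR2].
  apply (polar_flow n (2 * sin th) (fun _ => 1) (fun j => - INR j * (2 * th)) Hn HR1); [intros; lra|].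
  intros j Hj.
  destruct j as [|k]; simpl prv.
  - assert (Hc : cos (- INR 0 * (2 * th) - - INR (n - 1) * (2 * th)) = 1/2).
    { rewrite Hn1. replace (- INR 0 * (2 * th) - - (INR n - 1) * (2 * th)) with (PI/3 + 2 * INR m * PI).
      + rewrite cos_period. apply cos_PI3.
      + simpl (INR 0). rewrite Hth, HnR. field. lra. }
    rewrite Hc. assert (1 <= 2 * sin th * (2 * sin th)) by nra. lra.
  - assert (Hc : cos (- INR (S k) * (2 * th) - - INR k * (2 * th)) = cos (2 * th)).
    { rewrite S_INR. replace (- (INR k + 1) * (2 * th) - - INR k * (2 * th)) with (- (2 * th)) by ring.
      apply cos_neg. }
    rewrite Hc. split; nra.
Qed.

Lemma flow_3 n m : n = (6 * m + 3)%nat ->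
  has_complex_nz_flow (wheel n) (1 + 2 * sin (PI / 6 * (INR n / INR (n - 1)))).
Proof.
  intros En. assert (Hn : (3 <= n)%nat) by lia.
  assert (HnR : INR n = 6 * INR m + 3) by (rewrite (INR_6m n m _ En); simpl (INR (S _)); ring).
  assert (Hm0 : 0 <= INR m) by apply pos_INR.
  pose proof PI_bounds.
  assert (Hn1 : INR (n - 1) = INR n - 1) by (rewrite minus_INR by lia; reflexivity).
  assert (Hn2 : INR (n - 2) = INR n - 2) by (rewrite minus_INR by lia; reflexivity).
  set (th := PI / 6 * (INR n / INR (n - 1))).
  assert (Hth : th = PI/6 + PI/(6 * (INR n - 1))).
  { unfold th. rewrite Hn1. field. lra. }
  assert (Hr : PI/6 <= th <= PI/2).
  { rewrite Hth. assert (0 <= PI/(6 * (INR n - 1)) <= PI/3).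
    { split; [apply Rlt_le, Rdiv_lt_0_compat; lra|].
      apply (Rmult_le_reg_r (6 * (INR n - 1))); [lra|]. unfold Rdiv. rewrite Rmult_assoc, Rinv_l by lra. nra. }
    lra. }
  destruct (R_facts th Hr) as [HR1 HR2].
  set (RR := 2 * sin th) in *.
  set (mu := PI/2 - th).
  assert (Hmu : cos mu = RR / 2) by (unfold mu, RR; rewrite cos_shift; field).
  assert (Hkey : INR (n - 2) * (2 * th) - mu = mu + 2 * INR m * PI).
  { unfold mu. rewrite Hn2, Hth, HnR. field. lra. }
  apply (polar_flow n RR (fun j => if Nat.eqb j (n - 1) then RR else 1)
           (fun j => if Nat.eqb j (n - 1) then INR (n - 2) * (2 * th) - mu else INR j * (2 * th)) Hn HR1).
  { intros j _. destruct (Nat.eqb j (n - 1)); lra. }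
  intros j Hj.
  destruct j as [|k]; simpl prv.
  - replace (Nat.eqb 0 (n - 1)) with false by (symmetry; apply Nat.eqb_neq; lia).
    rewrite Nat.eqb_refl. rewrite Hkey.
    replace (INR 0 * (2 * th) - (mu + 2 * INR m * PI)) with (- mu - 2 * INR m * PI) by (simpl; ring).
    rewrite cos_shift_period, cos_neg, Hmu. split; nra.
  - destruct (Nat.eqb_spec (S k) (n - 1)) as [E1|E1].
    + replace (Nat.eqb k (n - 1)) with false by (symmetry; apply Nat.eqb_neq; lia).
      replace k with (n - 2)%nat by lia.
      replace (INR (n - 2) * (2 * th) - mu - INR (n - 2) * (2 * th)) with (- mu) by ring.
      rewrite cos_neg, Hmu. split; nra.
    + replace (Nat.eqb k (n - 1)) with false by (symmetry; apply Nat.eqb_neq; lia).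
      rewrite S_INR. replace ((INR k + 1) * (2 * th) - INR k * (2 * th)) with (2 * th) by ring.
      split; nra.
Qed.

Lemma cm_sq x y : cm x y * cm x y = x * x + y * y.
Proof. unfold cm. rewrite sqrt_sqrt; [ring|]. nra. Qed.

Lemma unit_cm x y : 0 < cm x y -> x / cm x y * (x / cm x y) + y / cm x y * (y / cm x y) = 1.
Proof.
  intros H. replace (x / cm x y * (x / cm x y) + y / cm x y * (y / cm x y))
    with ((x * x + y * y) / (cm x y * cm x y)) by (field; lra).
  rewrite <- cm_sq. field. lra.
Qed.

Lemma extract n r : (3 <= n)%nat -> (r - 1) * (r - 1) < 2 -> has_complex_nz_flow (wheel n) r ->
  exists (th e : nat -> R) (k : Z),
   (forall j, (j < n)%nat -> 0 <= e j <= asin ((r - 1)/2) - PI/6) /\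
   (forall j, (j < n)%nat -> PI/3 - (e (prv n j) + e j) <= Rabs (th j) <=
        PI/3 + 2 * (asin ((r - 1)/2) - PI/6) - (e (prv n j) + e j)) /\
   (forall j, (j < n)%nat -> cos (Rabs (th j)) * (2 * (r - 1) * (r - 1)) <= 2 * (r - 1) * (r - 1) - 1
        /\ Rabs (th j) <= PI) /\
   rsum th (seq 0 n) = 2 * IZR k * PI.
Proof.
  intros Hn HR [o [phi Hf]].
  pose proof PI_bounds.
  set (R := r - 1) in *.
  assert (Hb := flow_to_seq n r o phi Hn Hf).
  set (X := fun k => fst (psi o phi (n + k))) in *.
  set (Y := fun k => snd (psi o phi (n + k))) in *.
  simpl in Hb. fold X Y in Hb.
  set (rho := fun j => cm (X j) (Y j)).
  set (Re := fun j => X j * X (prv n j) + Y j * Y (prv n j)).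
  set (Im := fun j => Y j * X (prv n j) - X j * Y (prv n j)).
  set (th := fun j => atan (Im j / Re j)).
  assert (Hprv : forall j, (j < n)%nat -> (prv n j < n)%nat) by (intros j Hj; destruct j; simpl; lia).
  assert (Hrho : forall j, (j < n)%nat -> 1 <= rho j <= R).
  { intros j Hj. destruct (Hb j Hj) as [H1 _]. unfold rho. unfold R. lra. }
  assert (HR1 : 1 <= R) by (destruct (Hrho 0%nat ltac:(lia)); lra).
  assert (Hd : forall j, (j < n)%nat ->
     cm (X j - X (prv n j)) (Y j - Y (prv n j)) * cm (X j - X (prv n j)) (Y j - Y (prv n j))
       = rho j * rho j + rho (prv n j) * rho (prv n j) - 2 * Re j).
  { intros j Hj. unfold rho, Re. rewrite !cm_sq. ring. }
  assert (HRe : forall j, (j < n)%nat -> 0 < Re j).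
  { intros j Hj. assert (E := Hd j Hj). destruct (Hb j Hj) as [_ [D1 D2]].
    fold R in D2. assert (P1 := Hrho j Hj). assert (P2 := Hrho (prv n j) (Hprv j Hj)).
    set (dd := cm (X j - X (prv n j)) (Y j - Y (prv n j))) in *.
    assert (dd * dd <= R * R) by nra.
    assert (1 <= rho j * rho j) by nra. assert (1 <= rho (prv n j) * rho (prv n j)) by nra.
    lra. }
  assert (Hang : forall j, (j < n)%nat ->
     cos (th j) * (rho j * rho (prv n j)) = Re j /\ sin (th j) * (rho j * rho (prv n j)) = Im j).
  { intros j Hj. apply (step_angle (X j) (Y j) (X (prv n j)) (Y (prv n j))). apply HRe; exact Hj. }
  exists th, (fun j => asin (rho j / 2) - PI/6).
  destruct (winding n th (fun j => X j / rho j) (fun j => Y j / rho j) ltac:(lia)) as [k Hk].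
  { intros j Hj. assert (P := Hrho j Hj). unfold rho in *. apply unit_cm. lra. }
  { intros j Hj. destruct (Hang j Hj) as [C S].
    assert (P1 := Hrho j Hj). assert (P2 := Hrho (prv n j) (Hprv j Hj)).
    assert (Hp2 : rho (prv n j) * rho (prv n j) = X (prv n j) * X (prv n j) + Y (prv n j) * Y (prv n j))
      by (unfold rho; apply cm_sq).
    assert (Ec : cos (th j) = Re j / (rho j * rho (prv n j))) by (rewrite <- C; field; lra).
    assert (Es : sin (th j) = Im j / (rho j * rho (prv n j))) by (rewrite <- S; field; lra).
    unfold rotx, roty. rewrite Ec, Es. split.
    - replace (Re j / (rho j * rho (prv n j)) * (X (prv n j) / rho (prv n j)) -
               Im j / (rho j * rho (prv n j)) * (Y (prv n j) / rho (prv n j)))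
        with ((Re j * X (prv n j) - Im j * Y (prv n j)) / (rho j * (rho (prv n j) * rho (prv n j))))
        by (field; lra).
      replace (Re j * X (prv n j) - Im j * Y (prv n j)) with (X j * (rho (prv n j) * rho (prv n j)))
        by (rewrite Hp2; unfold Re, Im; ring).
      field. lra.
    - replace (Im j / (rho j * rho (prv n j)) * (X (prv n j) / rho (prv n j)) +
               Re j / (rho j * rho (prv n j)) * (Y (prv n j) / rho (prv n j)))
        with ((Im j * X (prv n j) + Re j * Y (prv n j)) / (rho j * (rho (prv n j) * rho (prv n j))))
        by (field; lra).
      replace (Im j * X (prv n j) + Re j * Y (prv n j)) with (Y j * (rho (prv n j) * rho (prv n j)))
        by (rewrite Hp2; unfold Re, Im; ring).
      field. lra. }
  exists k.
  assert (HR2 : R * R <= 2) by lra.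
  assert (Hcos : forall j, (j < n)%nat ->
     cos (Rabs (th j)) * (2 * rho (prv n j) * rho j) =
       rho (prv n j) * rho (prv n j) + rho j * rho j
        - cm (X j - X (prv n j)) (Y j - Y (prv n j)) * cm (X j - X (prv n j)) (Y j - Y (prv n j))).
  { intros j Hj. destruct (Hang j Hj) as [C _]. rewrite Hd by exact Hj.
    assert (cos (Rabs (th j)) = cos (th j)).
    { destruct (Rle_dec 0 (th j)); [rewrite Rabs_pos_eq by lra; reflexivity|].
      rewrite Rabs_left by lra. apply cos_neg. }
    rewrite H0. lra. }
  assert (Hth : forall j, 0 <= Rabs (th j) <= PI).
  { intros j. split; [apply Rabs_pos|]. unfold th. pose proof (atan_bound (Im j / Re j)).
    apply Rabs_le. lra. }
  split; [|split; [|split]].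
  - intros j Hj. assert (P := Hrho j Hj).
    destruct (asin_half_facts (rho j) ltac:(lra) ltac:(nra)) as [[A1 A2] _].
    assert (asin (rho j / 2) <= asin (R/2)) by (apply asin_half_mono; lra).
    fold R. lra.
  - intros j Hj. destruct (Hb j Hj) as [_ [D1 D2]].
    assert (P1 := Hrho j Hj). assert (P2 := Hrho (prv n j) (Hprv j Hj)).
    assert (X1 := per_step (rho (prv n j)) (rho j) (cm (X j - X (prv n j)) (Y j - Y (prv n j))) R
                     (Rabs (th j)) P2 P1 ltac:(fold R in D2; lra) HR2 (Hth j) (Hcos j Hj)).
    simpl in X1. fold R. lra.
  - intros j Hj. split; [|apply Hth].
    destruct (Hb j Hj) as [_ [D1 D2]].
    assert (P1 := Hrho j Hj). assert (P2 := Hrho (prv n j) (Hprv j Hj)).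
    apply (per_step_V (rho (prv n j)) (rho j) (cm (X j - X (prv n j)) (Y j - Y (prv n j))) R
                     (Rabs (th j)) P2 P1 ltac:(fold R in D2; lra) HR2 (Hcos j Hj)).
  - exact Hk.
Qed.

Lemma rsum_lt f g l : l <> nil -> (forall i, In i l -> f i < g i) -> rsum f l < rsum g l.
Proof.
  induction l as [|a l IH]; intros Hne H; [congruence|].
  rewrite !rsum_cons. assert (H1 := H a (or_introl eq_refl)).
  destruct l as [|b l'].
  - unfold rsum; simpl. lra.
  - assert (rsum f (b :: l') < rsum g (b :: l')) by (apply IH; [congruence| intros i Hi; apply H; right; exact Hi]).
    lra.
Qed.

Lemma lower_core n r delta : (3 <= n)%nat -> Nat.odd n = true -> 0 < delta <= PI/12 -> 2 <= r ->
  has_complex_nz_flow (wheel n) r -> r < 1 + 2 * sin (PI/6 + delta) ->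
  exists (th : nat -> R) (U : R) (k : Z),
   0 <= U < delta /\
   (PI/3 <= 2 * U * (INR n - 1) \/
    exists c N : Z, (c = 1 \/ c = -1)%Z /\ N = (6 * k - c * Z.of_nat n)%Z /\
     rsum (fun j => Rabs (th j) - PI/3) (seq 0 n) = IZR c * IZR N * (PI / 3) /\
     Rabs (rsum (fun j => Rabs (th j) - PI/3) (seq 0 n)) <= 2 * U * INR n) /\
   (forall j, (j < n)%nat -> cos (Rabs (th j)) * (2 * (r - 1) * (r - 1)) <= 2 * (r - 1) * (r - 1) - 1
        /\ Rabs (th j) <= PI).
Proof.
  intros Hn Hodd Hd Hr Hf Hlt.
  pose proof PI_bounds.
  set (R := r - 1).
  assert (Hs1 : sin (PI/6 + delta) <= sin (PI/4)) by (apply sin_incr_1; lra).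
  rewrite sin_PI4 in Hs1.
  assert (Hq2 : sqrt 2 * sqrt 2 = 2) by (apply sqrt_sqrt; lra).
  assert (Hq : 0 < sqrt 2) by (apply sqrt_lt_R0; lra).
  assert (Hs2 : 2 * sin (PI/6 + delta) * (2 * sin (PI/6 + delta)) <= 2).
  { assert (Hs0 : 0 <= sin (PI/6 + delta)) by (apply sin_ge_0; lra).
    assert (2 * sin (PI/6 + delta) <= sqrt 2).
    { assert (E2 : 2 * (1 / sqrt 2) = sqrt 2).
      { rewrite <- Hq2 at 1. field. lra. }
      lra. }
    nra. }
  assert (HR2 : (r - 1) * (r - 1) < 2) by nra.
  destruct (extract n r Hn HR2 Hf) as [th [e [k [He [Hb [HV Hk]]]]]].
  exists th, (asin ((r - 1)/2) - PI/6), k.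
  assert (HU0 : 0 <= asin ((r - 1) / 2) - PI/6) by (destruct (He 0%nat ltac:(lia)); lra).
  assert (HUd : asin ((r - 1)/2) - PI/6 < delta).
  { destruct (Rlt_le_dec (asin ((r - 1)/2)) (PI/6 + delta)) as [L|L]; [lra|].
    exfalso.
    destruct (asin_half_facts (r - 1) ltac:(lra) ltac:(lra)) as [[A1 A2] A3].
    assert (sin (PI/6 + delta) <= sin (asin ((r - 1)/2))) by (apply sin_incr_1; lra).
    lra. }
  split; [lra|]. split; [|exact HV].
  apply (core n th e (asin ((r - 1)/2) - PI/6) k Hn Hodd He Hb Hk).
Qed.

Lemma mod6 n r : Nat.modulo n 6 = r -> n = (6 * (n / 6) + r)%nat.
Proof. intros H. pose proof (Nat.div_mod_eq n 6). lia. Qed.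

Lemma odd_of n m r : n = (6 * m + r)%nat -> Nat.odd r = true -> Nat.odd n = true.
Proof.
  intros -> Hr. apply Nat.odd_spec in Hr. destruct Hr as [t Ht]. apply Nat.odd_spec.
  exists (3 * m + t)%nat. lia.
Qed.

Lemma abs_cN (c N : Z) x : (c = 1 \/ c = -1)%Z -> x = IZR c * IZR N * (PI/3) ->
  Rabs x = Rabs (IZR N) * (PI / 3).
Proof.
  intros Hc ->. pose proof PI_bounds.
  rewrite !Rabs_mult, (Rabs_pos_eq (PI/3)) by lra.
  destruct Hc as [-> | ->]; simpl.
  - rewrite Rabs_R1. ring.
  - rewrite (Rabs_left (-1)) by lra. ring.
Qed.

Lemma IZR_abs_ge (N : Z) (a : Z) : (a <= N \/ N <= - a)%Z -> (0 <= a)%Z -> IZR a <= Rabs (IZR N).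
Proof.
  intros H Ha. rewrite <- abs_IZR. apply IZR_le. lia.
Qed.

Theorem theorem1 (n : nat) (hn : (3 <= n)%nat) :
  (Nat.even n = true -> is_complex_flow_number (wheel n) 2) /\
  (Nat.modulo n 6 = 1%nat \/ Nat.modulo n 6 = 3%nat ->
     is_complex_flow_number (wheel n)
       (1 + 2 * sin (PI / 6 * (INR n / INR (n - 1))))) /\
  (Nat.modulo n 6 = 5%nat ->
     is_complex_flow_number (wheel n)
       (1 + 2 * sin (PI / 6 * (INR (n + 1) / INR n)))).
Proof.
  pose proof PI_bounds.
  assert (Hn3 : 3 <= INR n) by (apply (le_INR 3) in hn; simpl in hn; lra).
  split; [|split].
  -
    intros He. split; [lra|]. split; [apply flow_even; assumption|]. intros r Hr _. exact Hr.
  -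
    intros Hm.
    set (delta := PI / (6 * (INR n - 1))).
    assert (Hth : PI / 6 * (INR n / INR (n - 1)) = PI/6 + delta).
    { unfold delta. rewrite minus_INR by lia. simpl (INR 1). field. lra. }
    assert (Hd : 0 < delta <= PI/12).
    { unfold delta. split; [apply Rdiv_lt_0_compat; lra|].
      apply (Rmult_le_reg_r (6 * (INR n - 1))); [lra|]. unfold Rdiv.
      rewrite Rmult_assoc, Rinv_l by lra. nra. }
    assert (Hsin : 1/2 <= sin (PI/6 + delta)).
    { rewrite <- sin_PI6. apply sin_incr_1; lra. }
    rewrite Hth.
    split; [lra|]. split.
    { rewrite <- Hth. destruct Hm as [Hm|Hm].
      - apply (flow_1 n (n / 6)); [apply mod6; exact Hm| exact hn].
      - apply (flow_3 n (n / 6)). apply mod6; exact Hm. }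
    intros r Hr Hf.
    destruct (Rle_lt_dec (1 + 2 * sin (PI/6 + delta)) r) as [Hle|Hlt]; [exact Hle|].
    exfalso.
    assert (En : exists m rr, n = (6 * m + rr)%nat /\ (rr = 1 \/ rr = 3)%nat /\ Nat.modulo n 6 = rr).
    { destruct Hm as [Hm|Hm]; exists (n / 6)%nat; [exists 1%nat|exists 3%nat]; split;
        try (apply mod6; exact Hm); split; auto. }
    destruct En as [m [rr [En [Hrr Hmr]]]].
    assert (Hodd : Nat.odd n = true) by (apply (odd_of n m rr En); destruct Hrr as [->| ->]; reflexivity).
    destruct (lower_core n r delta hn Hodd Hd Hr Hf Hlt) as [th [U [k [HU [Hcase HV]]]]].
    assert (HdU : 2 * U * (INR n - 1) < PI/3).
    { assert (2 * delta * (INR n - 1) = PI/3) by (unfold delta; field; lra). nra. }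
    destruct Hcase as [Hmix|[c [N [Hc [HN [Hsum Habs]]]]]]; [lra|].
    assert (HA := abs_cN c N _ Hc Hsum). rewrite HA in Habs.
    assert (HUn : 2 * U * INR n < PI / 2).
    { assert (2 * delta * INR n <= PI/2).
      { unfold delta. apply (Rmult_le_reg_r (6 * (INR n - 1))); [lra|].
        replace (2 * (PI / (6 * (INR n - 1))) * INR n * (6 * (INR n - 1))) with (2 * PI * INR n) by (field; lra).
        nra. }
      nra. }
    destruct Hrr as [-> | ->].
    +
      assert (Hz : (N = - c \/ 5 <= N \/ N <= -5)%Z) by (destruct Hc as [-> | ->]; lia).
      destruct Hz as [HNc|Hbig].
      *
        assert (Hsd : rsum (fun j => Rabs (th j) - PI/3) (seq 0 n) = - (PI/3)).
        { rewrite Hsum, HNc. destruct Hc as [-> | ->]; simpl; ring. }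
        assert (Hn7 : 7 <= INR n).
        { assert (7 <= n)%nat by lia. apply (le_INR 7) in H0. simpl in H0. lra. }
        set (z := PI/6 - PI/(6 * INR n)).
        assert (Hz0 : 0 < z < PI/6).
        { unfold z. assert (0 < PI/(6 * INR n)) by (apply Rdiv_lt_0_compat; lra).
          assert (PI/(6 * INR n) < PI/6).
          { apply (Rmult_lt_reg_r (6 * INR n)); [lra|]. unfold Rdiv.
            rewrite Rmult_assoc, Rinv_l by lra. nra. }
          lra. }
        assert (Hsz : 0 < sin z) by (apply sin_gt_0; lra).
        assert (T := trig_n1 (INR n) Hn7). fold delta in T. fold z in T.
        set (R := r - 1) in *.
        assert (HR1 : 1 <= R) by (unfold R; lra).
        assert (HRlt : 2 * R * sin z < 1).
        { assert (2 * R * sin z < 2 * (2 * sin (PI/6 + delta)) * sin z).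
          { apply Rmult_lt_compat_r; [exact Hsz|]. unfold R. lra. }
          lra. }
        assert (Hcz : cos (2 * z) * (2 * R * R) > 2 * R * R - 1).
        { rewrite cos_2a_sin. assert (4 * (R * sin z) * (R * sin z) < 1).
          { assert (0 <= R * sin z) by nra. assert (2 * (R * sin z) < 1) by lra. nra. }
          nra. }
        assert (Hgt : forall j, (j < n)%nat -> 2 * z < Rabs (th j)).
        { intros j Hj. destruct (HV j Hj) as [V1 V2].
          apply cos_decreasing_0; try lra; try apply Rabs_pos.
          apply (Rmult_lt_reg_r (2 * R * R)); [nra|]. lra. }
        assert (Hlt2 : rsum (fun _ => 2 * z) (seq 0 n) < rsum (fun j => Rabs (th j)) (seq 0 n)).
        { apply rsum_lt.
          - destruct n; [lia|]. simpl. congruence.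
          - intros i Hi. apply in_seq in Hi. apply Hgt. lia. }
        rewrite rsum_const, length_seq in Hlt2.
        rewrite rsum_minus, rsum_const, length_seq in Hsd.
        assert (INR n * (2 * z) = INR n * (PI/3) - PI/3) by (unfold z; field; lra).
        lra.
      * assert (5 <= Rabs (IZR N)) by (apply (IZR_abs_ge N 5); lia). nra.
    +
      assert (Hz : (3 <= N \/ N <= -3)%Z) by (destruct Hc as [-> | ->]; lia).
      assert (3 <= Rabs (IZR N)) by (apply (IZR_abs_ge N 3); lia). nra.
  -
    intros Hm.
    set (delta := PI / (6 * INR n)).
    assert (Hth : PI / 6 * (INR (n + 1) / INR n) = PI/6 + delta).
    { unfold delta. rewrite plus_INR. simpl (INR 1). field. lra. }
    assert (Hd : 0 < delta <= PI/12).
    { unfold delta. split; [apply Rdiv_lt_0_compat; lra|].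
      apply (Rmult_le_reg_r (6 * INR n)); [lra|]. unfold Rdiv.
      rewrite Rmult_assoc, Rinv_l by lra. nra. }
    assert (Hsin : 1/2 <= sin (PI/6 + delta)).
    { rewrite <- sin_PI6. apply sin_incr_1; lra. }
    rewrite Hth.
    split; [lra|]. split.
    { rewrite <- Hth. apply (flow_5 n (n / 6)). apply mod6; exact Hm. }
    intros r Hr Hf.
    destruct (Rle_lt_dec (1 + 2 * sin (PI/6 + delta)) r) as [Hle|Hlt]; [exact Hle|].
    exfalso.
    assert (En := mod6 n 5 Hm).
    assert (Hodd : Nat.odd n = true) by (apply (odd_of n (n / 6) 5 En); reflexivity).
    destruct (lower_core n r delta hn Hodd Hd Hr Hf Hlt) as [th [U [k [HU [Hcase HV]]]]].
    assert (HdU : 2 * U * INR n < PI/3).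
    { assert (2 * delta * INR n = PI/3) by (unfold delta; field; lra). nra. }
    destruct Hcase as [Hmix|[c [N [Hc [HN [Hsum Habs]]]]]]; [nra|].
    assert (HA := abs_cN c N _ Hc Hsum). rewrite HA in Habs.
    assert (Hz : (1 <= N \/ N <= -1)%Z) by (destruct Hc as [-> | ->]; lia).
    assert (1 <= Rabs (IZR N)) by (apply (IZR_abs_ge N 1); lia). nra.
Qed.
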